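(* Let $p$ be a prime. For an operator $A\in\mathcal{B}(\mathbb{Q}_p(\mathbb{N}))$ the following are equivalent: (a) $A\in\mathcal{K}(\mathbb{Q}_p(\mathbb{N}))$; (b) the matrix entries of $A$ converge to zero, i.e. for every $\varepsilon>0$ only finitely many pairs $(i,j)$ satisfy $|A_{ij}|_p>\varepsilon$; (c) $A$ maps norm-bounded sets onto relatively norm-compact subsets of $\mathbb{Q}_p(\mathbb{N})$. Moreover, the set of operators with these properties is an ideal of $\mathcal{B}(\mathbb{Q}_p(\mathbb{N}))$ that is closed under $A\mapsto A^*$.
   Context: $\mathbb{Q}_p(\mathbb{N})$ is the set of maps $\xi:\mathbb{N}\to\mathbb{Q}_p$ with $|\xi(i)|_p\le1$ for all but finitely many $i$, a $\mathbb{Z}_p$-module under coordinatewise operations, with the topology $\tau$ in which $A\subseteq\mathbb{Q}_p(\mathbb{N})$ is open iff for every finite $P\subseteq\mathbb{N}$ the set $A\cap\big(\prod_{i\in P}\mathbb{Q}_p\times\prod_{j\notin P}\mathbb{Z}_p\big)$ is open in the product topology. $\mathcal{B}(\mathbb{Q}_p(\mathbb{N}))$ is the algebra of $\tau$-continuous $\mathbb{Z}_p$-linear maps; the norm on $\mathbb{Q}_p(\mathbb{N})$ is $\|\xi\|=\max_i|\xi(i)|_p$. Matrix entries: $A_{ij}=(A\delta_j)(i)$ where $\delta_j$ is the indicator of $\{j\}$. $\mathcal{K}(\mathbb{Q}_p(\mathbb{N}))$ is the set of operators mapping norm-bounded sets onto relatively $\tau$-compact sets. The adjoint $A^*$ is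 the unique operator in $\mathcal{B}(\mathbb{Q}_p(\mathbb{N}))$ with $\langle A\xi,\eta\rangle=\langle\xi,A^*\eta\rangle$ for the pairing $\langle\xi,\eta\rangle=\iota\big(\sum_i(\xi(i)\eta(i)+\mathbb{Z}_p)\big)$, $\iota:\mathbb{Q}_p/\mathbb{Z}_p\hookrightarrow\mathbb{R}/\mathbb{Z}\cong S^1$ canonical; its matrix is the transpose of that of $A$. *)

(* Defs.v *)
From HB Require Import structures.
From mathcomp Require Import all_boot all_order all_algebra.
From mathcomp Require Import reals.
From Stdlib Require List.
Set Implicit Arguments. Unset Strict Implicit. Unset Printing Implicit Defensive.
Import Order.TTheory GRing.Theory Num.Theory.
Local Open Scope ring_scope.

(* (K, abs) is the field Q_p of p-adic numbers with the p-adic absolute value,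
   characterized up to isometric isomorphism as the completion of (Q, |.|_p):
   a field with a non-archimedean absolute value, |p| = 1/p, in which Q is
   dense, and which is complete. *)
Record is_Qp (p : nat) (R : realType) (K : fieldType) (abs : K -> R) : Prop := {
  Qp_abs_ge0 : forall x, 0 <= abs x;
  Qp_abs_eq0 : forall x, abs x = 0 <-> x = 0;
  Qp_abs_mul : forall x y, abs (x * y) = abs x * abs y;
  Qp_abs_ultra : forall x y, abs (x + y) <= Num.max (abs x) (abs y);
  Qp_abs_p : abs (p%:R) = (p%:R)^-1;
  Qp_rat_dense : forall x (e : R), 0 < e -> exists q : rat, abs (x - ratr q) < e;
  Qp_complete : forall u : nat -> K,
     (forall e : R, 0 < e -> exists N, forall m n, (N <= m)%N -> (N <= n)%N ->
        abs (u m - u n) < e) ->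
     exists l, forall e : R, 0 < e -> exists N, forall n, (N <= n)%N -> abs (u n - l) < e
}.

Section QpN.
Variables (R : realType) (K : fieldType) (abs : K -> R).

Definition Zp (x : K) : Prop := abs x <= 1.

Definition QpN (x : nat -> K) : Prop := exists N, forall i, (N <= i)%N -> Zp (x i).

Definition XP (P : seq nat) (x : nat -> K) : Prop := forall j, j \notin P -> Zp (x j).

(* the topology tau: U open iff U cap X_P is open in the product topology
   of X_P for every finite P (basic neighbourhoods restrict finitely many
   coordinates) *)
Definition tau_open (U : (nat -> K) -> Prop) : Prop :=
  (forall x, U x -> QpN x) /\
  forall (P : seq nat) x, XP P x -> U x ->
    exists (n : nat) (e : R), 0 < e /\
      forall y, XP P y -> (forall i, (i < n)%N -> abs (y i - x i) < e) -> U y.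

Definition tau_closure (S : (nat -> K) -> Prop) (x : nat -> K) : Prop :=
  QpN x /\ forall U, tau_open U -> U x -> exists y, U y /\ S y.

Definition tau_compact (C : (nat -> K) -> Prop) : Prop :=
  (forall x, C x -> QpN x) /\
  forall (I : Type) (U : I -> (nat -> K) -> Prop),
    (forall i, tau_open (U i)) -> (forall x, C x -> exists i, U i x) ->
    exists s : list I, forall x, C x -> exists i, List.In i s /\ U i x.

Definition rel_tau_compact (S : (nat -> K) -> Prop) : Prop :=
  tau_compact (tau_closure S).

Definition normle (x : nat -> K) (r : R) : Prop := forall i, abs (x i) <= r.

(* open norm ball: ||y - x|| < e (the sup is attained iff bounded by some d < e) *)
Definition nball (x : nat -> K) (e : R) (y : nat -> K) : Prop :=
  QpN y /\ exists d, d < e /\ normle (fun i => y i - x i) d.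

Definition norm_open (U : (nat -> K) -> Prop) : Prop :=
  (forall x, U x -> QpN x) /\
  forall x, U x -> exists e : R, 0 < e /\ forall y, nball x e y -> U y.

Definition norm_closure (S : (nat -> K) -> Prop) (x : nat -> K) : Prop :=
  QpN x /\ forall U, norm_open U -> U x -> exists y, U y /\ S y.

Definition norm_compact (C : (nat -> K) -> Prop) : Prop :=
  (forall x, C x -> QpN x) /\
  forall (I : Type) (U : I -> (nat -> K) -> Prop),
    (forall i, norm_open (U i)) -> (forall x, C x -> exists i, U i x) ->
    exists s : list I, forall x, C x -> exists i, List.In i s /\ U i x.

Definition rel_norm_compact (S : (nat -> K) -> Prop) : Prop :=
  norm_compact (norm_closure S).

Definition norm_bounded (S : (nat -> K) -> Prop) : Prop :=
  (forall x, S x -> QpN x) /\ exists M : R, forall x, S x -> normle x M.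

Definition image (A : (nat -> K) -> (nat -> K)) (S : (nat -> K) -> Prop)
  (y : nat -> K) : Prop := exists x, S x /\ y = A x.

(* A in B(Q_p(N)): a tau-continuous Z_p-linear self-map of Q_p(N)
   (values of A outside Q_p(N) are irrelevant) *)
Definition is_op (A : (nat -> K) -> (nat -> K)) : Prop :=
  [/\ forall x, QpN x -> QpN (A x),
      forall x y, QpN x -> QpN y -> A (fun i => x i + y i) = (fun i => A x i + A y i),
      forall a x, Zp a -> QpN x -> A (fun i => a * x i) = (fun i => a * A x i)
    & forall U, tau_open U -> tau_open (fun x => QpN x /\ U (A x))].

Definition compact_op (A : (nat -> K) -> (nat -> K)) : Prop :=
  forall S, norm_bounded S -> rel_tau_compact (image A S).

Definition norm_compact_op (A : (nat -> K) -> (nat -> K)) : Prop :=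
  forall S, norm_bounded S -> rel_norm_compact (image A S).

Definition Kop (A : (nat -> K) -> (nat -> K)) : Prop := is_op A /\ compact_op A.

Definition delta (j : nat) : nat -> K := fun i => if i == j then 1 else 0.

Definition entry (A : (nat -> K) -> (nat -> K)) (i j : nat) : K := A (delta j) i.

Definition entries_to_zero (A : (nat -> K) -> (nat -> K)) : Prop :=
  forall e : R, 0 < e -> exists s : seq (nat * nat),
    forall i j, e < abs (entry A i j) -> (i, j) \in s.

(* <x1, y1> = <x2, y2>, computed in Q_p/Z_p (iota is injective) *)
Definition pair_eq (x1 y1 x2 y2 : nat -> K) : Prop :=
  exists N : nat,
    (forall i, (N <= i)%N -> Zp (x1 i * y1 i) /\ Zp (x2 i * y2 i)) /\
    Zp ((\sum_(i < N) x1 i * y1 i) - (\sum_(i < N) x2 i * y2 i)).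

Definition is_adjoint (A B : (nat -> K) -> (nat -> K)) : Prop :=
  forall xi eta, QpN xi -> QpN eta -> pair_eq (A xi) eta xi (B eta).

End QpN.

(* Main.v *)
Require Import Defs.
From HB Require Import structures.
From mathcomp Require Import all_boot all_order all_algebra.
From mathcomp Require Import reals.
From mathcomp Require Import ring lra zify.
From Stdlib Require List.
Set Implicit Arguments. Unset Strict Implicit. Unset Printing Implicit Defensive.
Import Order.TTheory GRing.Theory Num.Theory.
Local Open Scope ring_scope.
Set Warnings "-notation-overridden,-ambiguous-paths".

Section Main.
Variables (p : nat) (R : realType) (K : fieldType) (abs : K -> R).
Hypothesis hp : prime p.
Hypothesis hQ : is_Qp p abs.

Lemma abs_ge0 x : 0 <= abs x. Proof. exact: (Qp_abs_ge0 hQ x). Qed.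
Lemma abs_mul x y : abs (x * y) = abs x * abs y. Proof. exact: (Qp_abs_mul hQ x y). Qed.
Lemma abs_eq0 x : abs x = 0 <-> x = 0. Proof. exact: (Qp_abs_eq0 hQ x). Qed.
Lemma abs0 : abs 0 = 0. Proof. by apply/abs_eq0. Qed.
Lemma abs_ultra x y : abs (x + y) <= Num.max (abs x) (abs y).
Proof. exact: (Qp_abs_ultra hQ x y). Qed.

Lemma abs1 : abs 1 = 1.
Proof.
have h := abs_mul 1 1; rewrite mulr1 in h.
have n0 : abs 1 != 0 by apply/eqP => /abs_eq0 /eqP; rewrite oner_eq0.
by apply: (mulfI n0); rewrite mulr1 -h.
Qed.

Lemma absN1 : abs (-1) = 1.
Proof.
have h := abs_mul (-1) (-1); rewrite mulrNN mulr1 abs1 in h.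
have h0 := abs_ge0 (-1).
have : (abs (-1) - 1) * (abs (-1) + 1) = 0 by rewrite -subr_sqr expr1n expr2 -h subrr.
move/eqP; rewrite mulf_eq0 => /orP [/eqP|/eqP] e.
  by apply/eqP; rewrite -subr_eq0 e.
have : 0 < abs (-1) + 1 by apply: ltr_wpDl.
by rewrite e ltxx.
Qed.

Lemma absN x : abs (- x) = abs x.
Proof. by rewrite -mulN1r abs_mul absN1 mul1r. Qed.

Lemma absB x y : abs (x - y) = abs (y - x).
Proof. by rewrite -absN opprB. Qed.

Lemma abs_le_add x y b : abs x <= b -> abs y <= b -> abs (x + y) <= b.
Proof.
move=> hx hy; apply: le_trans (abs_ultra x y) _.
by rewrite ge_max hx hy.
Qed.

Lemma abs_lt_add x y b : abs x < b -> abs y < b -> abs (x + y) < b.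
Proof.
move=> hx hy; apply: le_lt_trans (abs_ultra x y) _.
by rewrite gt_max hx hy.
Qed.

Lemma abs_le_sub x y b : abs x <= b -> abs y <= b -> abs (x - y) <= b.
Proof. by move=> hx hy; apply: abs_le_add => //; rewrite absN. Qed.

Lemma abs_lt_sub x y b : abs x < b -> abs y < b -> abs (x - y) < b.
Proof. by move=> hx hy; apply: abs_lt_add => //; rewrite absN. Qed.

Lemma abs_triangle x y : abs (x + y) <= abs x + abs y.
Proof.
apply: le_trans (abs_ultra x y) _; rewrite ge_max.
by rewrite lerDl lerDr !abs_ge0.
Qed.

Lemma abs_sum_le n (f : nat -> K) b : 0 <= b -> (forall j, (j < n)%N -> abs (f j) <= b) ->
  abs (\sum_(j < n) f j) <= b.
Proof.
move=> b0; elim: n => [|n IH] h; first by rewrite big_ord0 abs0.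
rewrite big_ord_recr /=; apply: abs_le_add; last exact: h.
by apply: IH => j hj; apply: h; apply: ltnW.
Qed.

Lemma abs_inv x : abs (x^-1) = (abs x)^-1.
Proof.
have [->|x0] := eqVneq x 0; first by rewrite invr0 abs0 invr0.
have : abs x * abs x^-1 = 1 by rewrite -abs_mul mulfV // abs1.
have ax0 : abs x != 0 by apply/eqP => /abs_eq0; apply/eqP.
by move=> h; rewrite -[RHS]mulr1 -h mulrA mulVf // mul1r.
Qed.

Lemma abs_div x y : abs (x / y) = abs x / abs y.
Proof. by rewrite abs_mul abs_inv. Qed.

Lemma abs_natr n : abs (n%:R) <= 1.
Proof.
elim: n => [|n IH]; first by rewrite abs0.
by rewrite -addn1 natrD; apply: abs_le_add => //; rewrite abs1.
Qed.

Lemma abs_intr (z : int) : abs (z%:~R) <= 1.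
Proof. by case: z => n; rewrite ?NegzE ?mulrNz ?absN abs_natr. Qed.

Lemma abs_exp x n : abs (x ^+ n) = (abs x) ^+ n.
Proof.
elim: n => [|n IH]; first by rewrite !expr0 abs1.
by rewrite !exprS abs_mul IH.
Qed.

Lemma p_gt1 : (1 < p)%N. Proof. exact: prime_gt1. Qed.
Lemma pR_gt1 : 1 < (p%:R : R). Proof. by rewrite ltr1n p_gt1. Qed.
Lemma pR_gt0 : 0 < (p%:R : R). Proof. exact: lt_trans ltr01 pR_gt1. Qed.

Lemma abs_p : abs (p%:R) = (p%:R)^-1. Proof. exact: (Qp_abs_p hQ). Qed.


Lemma rho_gt0 N : 0 < ((p%:R : R)^-1)^+N.
Proof. by apply: exprn_gt0; rewrite invr_gt0 pR_gt0. Qed.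

Lemma rho_le1 N : ((p%:R : R)^-1)^+N <= 1.
Proof.
apply: exprn_ile1; first by rewrite invr_ge0 ler0n.
by rewrite invf_le1 ?pR_gt0 // ltW // pR_gt1.
Qed.

Lemma rho_S N : ((p%:R : R)^-1)^+N.+1 <= ((p%:R : R)^-1)^+N.
Proof.
rewrite exprS; apply: ler_piMl; first by apply: exprn_ge0; rewrite invr_ge0 ler0n.
by rewrite invf_le1 ?pR_gt0 // ltW // pR_gt1.
Qed.

Lemma rho_mono N M : (N <= M)%N -> ((p%:R : R)^-1)^+M <= ((p%:R : R)^-1)^+N.
Proof.
move/subnK => <-; elim: (M - N)%N => [|k IH]; first by rewrite add0n.
by rewrite addSn; apply: le_trans (rho_S _) IH.
Qed.

Lemma small_pow (e : R) : 0 < e -> exists k, ((p%:R : R)^-1)^+k < e.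
Proof.
move=> e0; exists (Num.Def.archi_bound e^-1).
have h1 : e^-1 < 2 ^+ (Num.Def.archi_bound e^-1) by apply: upper_nthrootP.
have h2 : (2 : R) ^+ (Num.Def.archi_bound e^-1) <= (p%:R) ^+ (Num.Def.archi_bound e^-1).
  by apply: lerXn2r; rewrite ?nnegrE ?ler0n // ler_nat prime_gt1.
rewrite exprVn invf_plt ?posrE ?exprn_gt0 ?pR_gt0 //.
exact: lt_le_trans h1 h2.
Qed.

Lemma abs_intr_abs (z : int) : abs (z%:~R) = abs ((`|z|%N)%:R).
Proof. by case: z => k //=; rewrite NegzE mulrNz absN. Qed.

Lemma abs_unit m : ~~ (p %| m)%N -> abs (m%:R) = 1.
Proof.
move=> hm.
have m0 : (0 < m)%N by case: m hm => //; rewrite dvdn0.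
have : coprime m p by rewrite coprime_sym prime_coprime.
case/(coprimeP _ m0) => [[u v]] /= huv.
have e : (u * m = v * p + 1)%N.
  by move: huv; set a := (u * m)%N; set b := (v * p)%N; lia.
have eK : (u%:R * m%:R : K) = v%:R * p%:R + 1 by rewrite -!natrM e natrD.
apply/eqP; rewrite eq_le abs_natr /=.
have h1 : (1 : K) = u%:R * m%:R - v%:R * p%:R by rewrite eK addrAC subrr add0r.
have hvp : abs (v%:R * p%:R : K) < 1.
  rewrite abs_mul abs_p; apply: le_lt_trans (_ : 1 * (p%:R)^-1 < 1).
    by apply: ler_wpM2r; rewrite ?abs_natr ?invr_ge0 ?ler0n.
  by rewrite mul1r invf_lt1 ?pR_gt0 ?pR_gt1.
have hum : 1 <= abs (u%:R * m%:R : K).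
  rewrite leNgt; apply/negP => hlt.
  have := abs_lt_sub hlt hvp; rewrite -h1 abs1 ltxx //.
apply: le_trans hum _; rewrite abs_mul.
by apply: ler_piMl; rewrite ?abs_ge0 ?abs_natr.
Qed.

Lemma abs_natrp (x : nat) N : abs ((x * p ^ N)%:R : K) <= ((p%:R : R)^-1)^+N.
Proof.
rewrite natrM natrX abs_mul abs_exp abs_p.
by apply: ler_piMl; [apply: exprn_ge0; rewrite invr_ge0 ler0n | exact: abs_natr].
Qed.

Lemma abs_natr_gt0 m : (0 < m)%N -> 0 < abs (m%:R : K).
Proof.
elim: m {-2}m (leqnn m) => [|n IH] m hm m0; first by move: hm m0; case: m.
have [pm|pm] := boolP (p %| m)%N; last by rewrite abs_unit // ltr01.
case/dvdnP: pm => k mk.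
have k0 : (0 < k)%N by move: m0; rewrite mk muln_gt0 => /andP [].
have kn : (k <= n)%N.
  have : (k < m)%N by rewrite mk -[X in (X < _)%N]muln1 ltn_pmul2l // prime_gt1.
  by move=> h; rewrite -ltnS; apply: leq_trans h hm.
rewrite mk natrM abs_mul abs_p; apply: mulr_gt0; first exact: IH.
by rewrite invr_gt0 pR_gt0.
Qed.

Lemma natr_neq0 m : (0 < m)%N -> (m%:R : K) != 0.
Proof.
move=> /abs_natr_gt0 h; apply/eqP => e; move: h; by rewrite e abs0 ltxx.
Qed.

Lemma net1 (z : K) N : abs z <= 1 ->
  exists a : nat, (a < p ^ N)%N /\ abs (z - a%:R) <= ((p%:R : R)^-1)^+N.
Proof.
move=> hz.
set rho := ((p%:R : R)^-1)^+N.
have [q hq] := Qp_rat_dense hQ z (rho_gt0 N).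
have hq1 : abs (ratr q : K) <= 1.
  have -> : (ratr q : K) = z - (z - ratr q) by rewrite opprB addrC subrK.
  by apply: abs_le_sub => //; apply: ltW (lt_le_trans hq (rho_le1 N)).
set n := numq q; set d := `|denq q|%N.
have dq : denq q = d%:Z by rewrite /d gtz0_abs ?denq_gt0.
have rq : (ratr q : K) = n%:~R / d%:R by rewrite /ratr -/n dq.
have cnd : coprime `|n| d by rewrite /n /d coprime_num_den.
have hd : ~~ (p %| d)%N.
  apply/negP => pd.
  have pn : ~~ (p %| `|n|)%N.
    apply/negP => pn; move: cnd; rewrite /coprime => /eqP g1.
    have : (p %| gcdn `|n| d)%N by rewrite dvdn_gcd pn pd.
    by rewrite g1 dvdn1 => /eqP p1; move: (prime_gt1 hp); rewrite p1.
  have an : abs (n%:~R : K) = 1 by rewrite abs_intr_abs abs_unit.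
  case/dvdnP: pd => k dk.
  have ad : abs (d%:R : K) <= (p%:R)^-1.
    by have := abs_natrp k 1; rewrite expn1 expr1 -dk.
  have d0 : (0 < d)%N by rewrite /d absz_gt0 denq_neq0.
  have ad0 : 0 < abs (d%:R : K) by apply: abs_natr_gt0.
  move: hq1; rewrite rq abs_div an.
  rewrite mul1r invf_le1 // => h1.
  have : (1 : R) <= (p%:R)^-1 := le_trans h1 ad.
  by rewrite invf_ge1 ?pR_gt0 // leNgt pR_gt1.
have ad1 : abs (d%:R : K) = 1 by apply: abs_unit.
have d0 : (d%:R : K) != 0 by apply/eqP => d0; move: ad1; rewrite d0 abs0 => /eqP; rewrite eq_sym oner_eq0.
have dpos : (0 < d)%N by rewrite /d absz_gt0 denq_neq0.
have : coprime d (p ^ N) by apply: coprimeXr; rewrite coprime_sym prime_coprime.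
case/(coprimeP _ dpos) => [[u v]] /= huv.
have e : (u * d = v * p ^ N + 1)%N.
  by move: huv; set a := (u * d)%N; set b := (v * p ^ N)%N; lia.
have eK : (u%:R * d%:R : K) = v%:R * (p ^ N)%N%:R + 1 by rewrite -!natrM e natrD.
set P := (p ^ N)%N.
have P0 : (0 < P)%N by rewrite expn_gt0 prime_gt0.
set b : int := n * u%:Z.
exists `|(b %% P%:Z)%Z|%N.
have hm0 : (0 <= (b %% P%:Z)%Z) by apply: modz_ge0; rewrite eqz_nat -lt0n.
have hm1 : (b %% P%:Z)%Z < P%:Z by apply: ltz_pmod; rewrite ltz_nat.
split; first by rewrite -ltz_nat gez0_abs.
have ea : ((`|(b %% P%:Z)%Z|%N)%:R : K) = ((b %% P%:Z)%Z)%:~R.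
  by rewrite -[in RHS](gez0_abs hm0).
have -> : z - (`|(b %% P%:Z)%Z|%N)%:R =
  (z - ratr q) + ((ratr q - b%:~R) + (b%:~R - ((b %% P%:Z)%Z)%:~R)) by rewrite ea; ring.
apply: abs_le_add; first exact: ltW.
apply: abs_le_add.
  have -> : (ratr q : K) - b%:~R = - (n%:~R * (v%:R * P%:R)) / d%:R.
    rewrite rq /b intrM /=.
    have -> : (n%:~R : K) * u%:R = n%:~R * (u%:R * d%:R) / d%:R by field.
    by rewrite eK; field.
  rewrite abs_div ad1 divr1 absN abs_mul abs_intr_abs.
  apply: le_trans (_ : 1 * abs (v%:R * P%:R : K) <= _).
    by apply: ler_wpM2r; rewrite ?abs_ge0 ?abs_natr.
  by rewrite mul1r -natrM abs_natrp.
have -> : (b%:~R : K) - ((b %% P%:Z)%Z)%:~R = ((b %/ P%:Z)%Z)%:~R * P%:R.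
  by rewrite {1}(divz_eq b P%:Z) intrD intrM addrK.
rewrite abs_mul abs_intr_abs /P natrX abs_exp abs_p.
by apply: ler_piMl; [apply: exprn_ge0; rewrite invr_ge0 ler0n | exact: abs_natr].
Qed.

Definition rho N : R := ((p%:R : R)^-1)^+N.
Definition box (r : nat -> R) (y : nat -> K) := forall i, abs (y i) <= r i.
Definition close n (e : R) (x y : nat -> K) := forall i, (i < n)%N -> abs (y i - x i) < e.

Lemma pK_neq0 : (p%:R : K) != 0. Proof. by apply: natr_neq0; apply: prime_gt0. Qed.

Lemma abs_pinv : abs ((p%:R : K)^-1) = p%:R.
Proof. by rewrite abs_inv abs_p invrK. Qed.

Lemma netm (y : K) m L : abs y <= (p%:R)^+m ->
  exists a : nat, (a < p ^ (L + m))%N /\ abs (y - a%:R * ((p%:R : K)^-1)^+m) <= rho L.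
Proof.
move=> hy.
have pm0 : (0 : R) < (p%:R)^+m by apply: exprn_gt0; apply: pR_gt0.
have hz : abs (y * (p%:R)^+m) <= 1.
  rewrite abs_mul abs_exp abs_p exprVn.
  by rewrite ler_pdivrMr // mul1r.
have [a [ha1 ha2]] := net1 (L + m) hz.
exists a; split => //.
have -> : y - a%:R * ((p%:R : K)^-1)^+m = (y * (p%:R)^+m - a%:R) * ((p%:R)^-1)^+m.
  rewrite mulrBl -mulrA -exprMn mulfV ?pK_neq0 // expr1n mulr1 //.
rewrite abs_mul abs_exp abs_pinv.
apply: le_trans (_ : rho (L + m) * (p%:R)^+m <= _).
  by apply: ler_wpM2r => //; apply: ltW.
by rewrite /rho exprD -mulrA -exprMn mulVf ?expr1n ?mulr1 // gt_eqF // pR_gt0.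
Qed.

Lemma rho_gt0' N : 0 < rho N. Proof. exact: rho_gt0. Qed.

Lemma small_rho (e : R) n : 0 < e -> exists l, (n <= l)%N /\ rho l < e.
Proof.
move=> /small_pow [k hk]; exists (maxn n k); split; first exact: leq_maxl.
by apply: le_lt_trans hk; apply: rho_mono; apply: leq_maxr.
Qed.

Lemma le_of_max_eps (a b : R) : 0 <= b -> (forall e, 0 < e -> a <= Num.max e b) -> a <= b.
Proof.
move=> b0 h; rewrite leNgt; apply/negP => ab.
have e0 : 0 < (a - b) / 2 by apply: divr_gt0 => //; rewrite subr_gt0.
have := h _ e0.
rewrite le_max => /orP [h1|h1]; lra.
Qed.

Section Compact.
Variables (I : Type) (U : I -> (nat -> K) -> Prop).

Definition FC (S : (nat -> K) -> Prop) :=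
  exists s : list I, forall x, S x -> exists i, List.In i s /\ U i x.

Lemma split_fin (S : (nat -> K) -> Prop) (Q : nat -> (nat -> K) -> Prop) B :
  ~ FC S -> (forall y, S y -> exists a, (a < B)%N /\ Q a y) ->
  exists a, ~ FC (fun y => S y /\ Q a y).
Proof.
move=> nS hS; apply: boolp.contrapT => hn.
have hall : forall a, FC (fun y => S y /\ Q a y).
  by move=> a; apply: boolp.contrapT => h; apply: hn; exists a.
have : forall B', FC (fun y => S y /\ exists a, (a < B')%N /\ Q a y).
  elim=> [|B' IH]; first by exists nil => x [_ [a []]].
  have [s1 h1] := IH; have [s2 h2] := hall B'.
  exists (s1 ++ s2)%list => x [Sx [a [ha Qa]]].
  have [ab|ab] := boolP (a < B')%N.
    have [i [hi Ui]] := h1 x (conj Sx (ex_intro _ a (conj ab Qa))).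
    by exists i; split => //; apply: List.in_or_app; left.
  have eaB : a = B' by apply/eqP; rewrite eqn_leq -ltnS ha leqNgt ab.
  rewrite eaB in Qa; have [i [hi Ui]] := h2 x (conj Sx Qa).
  by exists i; split => //; apply: List.in_or_app; right.
move=> /(_ B) [s hs]; apply: nS; exists s => x Sx.
by apply: hs; split => //; apply: hS.
Qed.

Lemma FC_mono (T T' : (nat -> K) -> Prop) : FC T -> (forall y, T' y -> T y) -> FC T'.
Proof. by move=> [s hs] h; exists s => x /h /hs. Qed.

Variables (r : nat -> R) (m : nat).
Hypothesis hr : forall i, r i <= (p%:R)^+m.

Lemma refine (S : (nat -> K) -> Prop) L k : ~ FC S -> (forall y, S y -> box r y) ->
  exists c : nat -> K, ~ FC (fun y => S y /\ forall i, (i < k)%N -> abs (y i - c i) <= rho L).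
Proof.
move=> nS hS; elim: k => [|k [c hc]].
  exists (fun _ => 0) => h; apply: nS; move: h => [s hs]; exists s => y Sy; apply: hs; split => // i; rewrite ltn0.
have := @split_fin (fun y => S y /\ forall i, (i < k)%N -> abs (y i - c i) <= rho L)
  (fun a y => abs (y k - a%:R * ((p%:R : K)^-1)^+m) <= rho L) (p ^ (L + m)) hc.
case.
  move=> y [Sy _]; apply: netm; apply: le_trans (hr k); exact: hS.
move=> a ha.
exists (fun i => if i == k then a%:R * ((p%:R : K)^-1)^+m else c i) => h; apply: ha.
move: h => [s hs]; exists s => y [[Sy hy] hk]; apply: hs; split => // i; rewrite ltnS leq_eqVlt.
case/orP => [/eqP ->|hi]; first by rewrite eqxx.
by rewrite (ltn_eqF hi); apply: hy.
Qed.

Variable (C : (nat -> K) -> Prop).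
Hypothesis hC : forall y, C y -> box r y.
Hypothesis hcl : forall z, box r z ->
  (forall n e, 0 < e -> exists y, C y /\ close n e z y) -> C z.
Hypothesis LP : forall i x, C x -> U i x ->
  exists n e, 0 < e /\ forall y, C y -> close n e x y -> U i y.
Hypothesis cov : forall x, C x -> exists i, U i x.

Lemma box_compact : FC C.
Proof.
apply: boolp.contrapT => nC.
have hex : forall lS : nat * ((nat -> K) -> Prop), exists c : nat -> K,
  ~ FC lS.2 -> (forall y, lS.2 y -> box r y) ->
  ~ FC (fun y => lS.2 y /\ forall i, (i < lS.1)%N -> abs (y i - c i) <= rho lS.1).
  move=> [l S] /=.
  have [hn|hn] := boolp.pselect (~ FC S /\ (forall y, S y -> box r y)).
    by have [c hc] := refine l l hn.1 hn.2; exists c.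
  by exists (fun _ => 0) => h1 h2; case: hn.
have [F hF] := boolp.choice hex.
pose fix Sq l := match l with
  | 0 => C
  | l'.+1 => fun y => Sq l' y /\ forall i, (i < l'.+1)%N ->
       abs (y i - F (l'.+1, Sq l') i) <= rho l'.+1 end.
pose cen l := match l with 0 => fun _ => 0 | l'.+1 => F (l, Sq l') end.
have SqC : forall l y, Sq l y -> C y.
  by elim=> [|l IH] y //= [/IH].
have Sqnc : forall l, ~ FC (Sq l).
  elim=> [|l IH] //=.
  have := hF (l.+1, Sq l); apply => //= y /SqC; exact: hC.
have Sqcen : forall l y, Sq l y -> forall i, (i < l)%N -> abs (y i - cen l i) <= rho l.
  by case=> [|l] y //= [_ h].
have Sqdec : forall l k y, (l <= k)%N -> Sq k y -> Sq l y.
  move=> l k y /subnK <-; elim: (k - l)%N => [|d IH] //=.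
  by move=> h; apply: IH; exact: h.1.
have hxe : forall l, exists y, Sq l y.
  move=> l; apply: boolp.contrapT => h; apply: (Sqnc l).
  by exists nil => y Sy; case: h; exists y.
have [x hx] := boolp.choice hxe.
have cauchy : forall l j k i, (l <= j)%N -> (l <= k)%N -> (i < l)%N ->
    abs (x j i - x k i) <= rho l.
  move=> l j k i hj hk hi.
  have h1 := Sqcen l _ (Sqdec l j _ hj (hx j)) i hi.
  have h2 := Sqcen l _ (Sqdec l k _ hk (hx k)) i hi.
  have -> : x j i - x k i = (x j i - cen l i) - (x k i - cen l i) by ring.
  exact: abs_le_sub.
have hze : forall i, exists zi, forall e, 0 < e -> exists N, forall n, (N <= n)%N ->
    abs (x n i - zi) < e.
  move=> i; apply: (Qp_complete hQ) => e e0.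
  have [l [hl hle]] := small_rho i.+1 e0.
  exists l => j k hj hk; apply: le_lt_trans hle; exact: cauchy.
have [z hz] := boolp.choice hze.
have zcen : forall l i, (i < l)%N -> abs (z i - cen l i) <= rho l.
  move=> l i hi; apply: le_of_max_eps; first exact: ltW (rho_gt0 _).
  move=> e e0; have [N hN] := hz i e e0.
  have e1 := hN (maxn N l) (leq_maxl _ _).
  have e2 := Sqcen l _ (Sqdec l (maxn N l) _ (leq_maxr _ _) (hx _)) i hi.
  have -> : z i - cen l i = - (x (maxn N l) i - z i) + (x (maxn N l) i - cen l i) by ring.
  apply: le_trans (abs_ultra _ _) _; rewrite absN.
  by rewrite ge_max !le_max (ltW e1) e2 orbT.
have zbox : box r z.
  move=> i.
  have r0 : 0 <= r i by apply: le_trans (abs_ge0 _) (hC (SqC 0 _ (hx 0)) i).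
  apply: le_of_max_eps => // e e0; have [N hN] := hz i e e0.
  have e1 := hN N (leqnn N).
  have e2 := hC (SqC _ _ (hx N)) i.
  have -> : z i = - (x N i - z i) + x N i by ring.
  apply: le_trans (abs_ultra _ _) _; rewrite absN.
  by rewrite ge_max !le_max (ltW e1) e2 orbT.
have zC : C z.
  apply: hcl => // n e e0.
  have [l [hl hle]] := small_rho n e0.
  exists (x l); split; first exact: SqC (hx l).
  move=> i hi.
  have e1 := Sqcen l _ (hx l) i (leq_trans hi hl).
  have e2 := zcen l i (leq_trans hi hl).
  apply: le_lt_trans hle.
  have -> : x l i - z i = (x l i - cen l i) - (z i - cen l i) by ring.
  exact: abs_le_sub.
have [i0 Ui0] := cov zC.
have [n [e [e0 hne]]] := LP zC Ui0.
have [l [hl hle]] := small_rho n e0.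
apply: (Sqnc l); exists [:: i0] => y Sy; exists i0; split; first by left.
apply: hne; first exact: SqC Sy.
move=> i hi.
have e1 := Sqcen l _ Sy i (leq_trans hi hl).
have e2 := zcen l i (leq_trans hi hl).
apply: le_lt_trans hle.
have -> : y i - z i = (y i - cen l i) - (z i - cen l i) by ring.
exact: abs_le_sub.
Qed.

End Compact.

Definition Xn N (y : nat -> K) := forall j, (N <= j)%N -> Defs.Zp abs (y j).

Lemma XP_iota N y : XP abs (iota 0 N) y <-> Xn N y.
Proof.
split=> h j hj; apply: h.
  by rewrite mem_iota add0n -leqNgt.
by move: hj; rewrite mem_iota add0n /= -leqNgt.
Qed.

Lemma Xn_QpN N y : Xn N y -> QpN abs y.
Proof. by move=> h; exists N. Qed.

Lemma Xn_mono N N' y : (N <= N')%N -> Xn N y -> Xn N' y.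
Proof. by move=> hN h j hj; apply: h; apply: leq_trans hN hj. Qed.

Lemma seq_bound (P : seq nat) : exists n, forall i, i \in P -> (i < n)%N.
Proof.
elim: P => [|a P [n hn]]; first by exists 0%N.
exists (maxn a.+1 n) => i; rewrite inE => /orP [/eqP ->|/hn h].
  by rewrite leq_max leqnn.
by rewrite leq_max h orbT.
Qed.

Lemma XP_Xn P y : XP abs P y -> exists N, Xn N y /\ forall i, i \in P -> (i < N)%N.
Proof.
have [n hn] := seq_bound P => h; exists n; split => // j hj; apply: h.
by apply/negP => /hn; rewrite ltnNge hj.
Qed.

Lemma zp0 : Defs.Zp abs 0. Proof. by rewrite /Defs.Zp abs0 ler01. Qed.
Lemma zp1 : Defs.Zp abs 1. Proof. by rewrite /Defs.Zp abs1. Qed.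
Lemma zp_add x y : Defs.Zp abs x -> Defs.Zp abs y -> Defs.Zp abs (x + y).
Proof. exact: abs_le_add. Qed.
Lemma zp_sub x y : Defs.Zp abs x -> Defs.Zp abs y -> Defs.Zp abs (x - y).
Proof. exact: abs_le_sub. Qed.
Lemma zp_opp x : Defs.Zp abs x -> Defs.Zp abs (- x).
Proof. by rewrite /Defs.Zp absN. Qed.
Lemma zp_mul x y : Defs.Zp abs x -> Defs.Zp abs y -> Defs.Zp abs (x * y).
Proof.
rewrite /Defs.Zp abs_mul => hx hy; apply: le_trans (_ : abs x * 1 <= 1).
  by apply: ler_wpM2l; rewrite ?abs_ge0.
by rewrite mulr1.
Qed.

Lemma QpN_add x y : QpN abs x -> QpN abs y -> QpN abs (fun i => x i + y i).
Proof.
move=> [N hN] [M hM]; exists (maxn N M) => i hi; apply: zp_add.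
  by apply: hN; apply: leq_trans hi; apply: leq_maxl.
by apply: hM; apply: leq_trans hi; apply: leq_maxr.
Qed.

Lemma QpN_opp x : QpN abs x -> QpN abs (fun i => - x i).
Proof. by move=> [N hN]; exists N => i /hN; apply: zp_opp. Qed.

Lemma QpN_sub x y : QpN abs x -> QpN abs y -> QpN abs (fun i => x i - y i).
Proof. by move=> hx hy; apply: QpN_add => //; apply: QpN_opp. Qed.

Lemma QpN_fin x N : (forall i, (N <= i)%N -> x i = 0) -> QpN abs x.
Proof. by move=> h; exists N => i /h ->; apply: zp0. Qed.

Lemma QpN0 : QpN abs (fun _ => 0).
Proof. by apply: (@QpN_fin _ 0%N). Qed.

Lemma QpN_delta c j : QpN abs (fun i => c * delta K j i).
Proof. by apply: (@QpN_fin _ j.+1) => i hi; rewrite /delta (gtn_eqF hi) mulr0. Qed.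

Lemma QpN_Zpmul a x : Defs.Zp abs a -> QpN abs x -> QpN abs (fun i => a * x i).
Proof. by move=> ha [N hN]; exists N => i /hN; apply: zp_mul. Qed.

Lemma QpN_Xn x : QpN abs x -> exists N, Xn N x.
Proof. by []. Qed.

Lemma tau_open_ext (U V : (nat -> K) -> Prop) :
  (forall x, QpN abs x -> (U x <-> V x)) -> (forall x, V x -> QpN abs x) ->
  tau_open abs U -> tau_open abs V.
Proof.
move=> e hV [hU1 hU2]; split => // P x hx /[dup] Vx /(e _ (hV _ Vx)) Ux.
have [n [d [d0 hd]]] := hU2 P x hx Ux.
exists n, d; split => // y hy cy; have Qy : QpN abs y.
  by have [N [hN _]] := XP_Xn hy; exists N.
by apply/(e _ Qy); apply: hd.
Qed.

Lemma tau_open_Xn N : tau_open abs (Xn N).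
Proof.
split; first by move=> x hx; exists N.
move=> P x hx hNx.
have [n hn] := seq_bound P.
exists (maxn n N), 1; split; first exact: ltr01.
move=> y hy cy j hj.
have [jP|jP] := boolP (j \in P); last exact: hy.
have jn : (j < maxn n N)%N by apply: leq_trans (hn _ jP) (leq_maxl _ _).
have := cy j jn; rewrite /Zp => h.
have -> : y j = (y j - x j) + x j by rewrite subrK.
by apply: abs_le_add; [exact: ltW | exact: hNx].
Qed.

Lemma tau_open_close n e (a : nat -> K) : tau_open abs (fun z => QpN abs z /\ close n e a z).
Proof.
split; first by move=> x [].
move=> P x hx [Qx cx].
have Qy : forall y, XP abs P y -> QpN abs y.
  by move=> y hy; have [N [hN _]] := XP_Xn hy; exists N.
case: n cx => [|n] cx.
  exists 0%N, 1; split; first exact: ltr01.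
  by move=> y hy _; split; [exact: Qy | move=> i].
exists n.+1, e; split; first exact: le_lt_trans (abs_ge0 _) (cx 0%N erefl).
move=> y hy cy; split; first exact: Qy.
move=> i hi; have -> : y i - a i = (y i - x i) + (x i - a i) by rewrite addrA subrK.
by apply: abs_lt_add; [apply: cy | apply: cx].
Qed.

Lemma tau_open_and U V : tau_open abs U -> tau_open abs V -> tau_open abs (fun x => U x /\ V x).
Proof.
move=> [hU1 hU2] [hV1 hV2]; split; first by move=> x [/hU1].
move=> P x hx [Ux Vx].
have [n1 [e1 [e10 h1]]] := hU2 P x hx Ux.
have [n2 [e2 [e20 h2]]] := hV2 P x hx Vx.
exists (maxn n1 n2), (Num.min e1 e2); split; first by rewrite lt_min e10 e20.
move=> y hy cy; split.
  apply: h1 => // i hi; have := cy i (leq_trans hi (leq_maxl _ _)).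
  by rewrite lt_min => /andP [].
apply: h2 => // i hi; have := cy i (leq_trans hi (leq_maxr _ _)).
by rewrite lt_min => /andP [].
Qed.

Lemma tau_open_gt i (t : R) : 0 <= t -> tau_open abs (fun y => QpN abs y /\ t < abs (y i)).
Proof.
move=> t0; split; first by move=> x [].
move=> P x hx [Qx tx]; exists i.+1, (abs (x i) - t); split; first by rewrite subr_gt0.
move=> y hy cy; split; first by have [N [hN _]] := XP_Xn hy; exists N.
have := cy i (ltnSn i); rewrite ltrBrDl => h.
rewrite ltNge; apply/negP => yt.
have g1 := abs_ge0 (x i - y i); have g2 := abs_ge0 (y i - x i).
have : abs (x i) <= Num.max (abs (y i)) (abs (x i - y i)).
  by have := abs_ultra (y i) (x i - y i); rewrite addrC subrK.
rewrite le_max => /orP [h1|h1].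
  by move: h; rewrite absB; lra.
by move: h; rewrite absB; lra.
Qed.

Lemma tau_open_QpN : tau_open abs (QpN abs).
Proof.
split => // P x hx _; exists 0%N, 1; split; first exact: ltr01.
by move=> y hy _; have [N [hN _]] := XP_Xn hy; exists N.
Qed.

Lemma tau_open_empty : tau_open abs (fun _ => False).
Proof. by split. Qed.

Lemma norm_open_Xn N : norm_open abs (Xn N).
Proof.
split; first by move=> x hx; exists N.
move=> x hx; exists 1; split; first exact: ltr01.
move=> y [Qy [d [d1 hd]]] j hj; rewrite /Zp.
have -> : y j = (y j - x j) + x j by rewrite subrK.
apply: abs_le_add; last exact: hx.
by apply: le_trans (hd j) _; apply: ltW.
Qed.

Lemma norm_open_gt i (t : R) : 0 <= t -> norm_open abs (fun y => QpN abs y /\ t < abs (y i)).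
Proof.
move=> t0; split; first by move=> x [].
move=> x [Qx tx]; exists (abs (x i) - t); split; first by rewrite subr_gt0.
move=> y [Qy [d [dl hd]]]; split => //.
have h := le_lt_trans (hd i) dl.
rewrite ltNge; apply/negP => yt.
have g1 := abs_ge0 (x i - y i); have g2 := abs_ge0 (y i - x i).
have : abs (x i) <= Num.max (abs (y i)) (abs (x i - y i)).
  by have := abs_ultra (y i) (x i - y i); rewrite addrC subrK.
rewrite le_max => /orP [h1|h1].
  by move: h; rewrite absB; lra.
by move: h; rewrite absB; lra.
Qed.

Lemma compact_in_Xn (Opn : ((nat -> K) -> Prop) -> Prop) (C : (nat -> K) -> Prop) :
  (forall x, C x -> QpN abs x) ->
  (forall (U : nat -> (nat -> K) -> Prop), (forall i, Opn (U i)) ->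
     (forall x, C x -> exists i, U i x) ->
     exists s : list nat, forall x, C x -> exists i, List.In i s /\ U i x) ->
  (forall N, Opn (Xn N)) -> exists N, forall x, C x -> Xn N x.
Proof.
move=> hC hcomp hopen.
have [s hs] := hcomp Xn hopen (fun x Cx => hC x Cx).
have : exists N, forall i, List.In i s -> (i <= N)%N.
  elim: s {hs} => [|a s [N hN]]; first by exists 0%N.
  exists (maxn a N) => i [<-|/hN h]; first exact: leq_maxl.
  by apply: leq_trans h (leq_maxr _ _).
move=> [N hN]; exists N => x /hs [i [/hN hi Ui]].
exact: Xn_mono hi Ui.
Qed.

Lemma bound_fin (f : nat -> R) N : exists M, 0 <= M /\ forall i, (i < N)%N -> f i <= M.
Proof.
elim: N => [|N [M [M0 hM]]]; first by exists 0.
exists (Num.max M (f N)); split; first by rewrite le_max M0.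
move=> i; rewrite ltnS leq_eqVlt => /orP [/eqP ->|hi]; first by rewrite le_max lexx orbT.
by rewrite le_max hM.
Qed.

Lemma QpN_bounded x : QpN abs x -> exists M, 1 <= M /\ normle abs x M.
Proof.
move=> [N hN]; have [M [M0 hM]] := bound_fin (fun i => abs (x i)) N.
exists (Num.max M 1); split; first by rewrite le_max lexx orbT.
move=> i; have [iN|iN] := ltnP i N; first by rewrite le_max hM.
by rewrite le_max hN ?orbT.
Qed.

Definition trunc n (x : nat -> K) := fun i => if (i < n)%N then x i else 0.
Definition tail n (x : nat -> K) := fun i => if (i < n)%N then 0 else x i.

Section Op.
Variable A : (nat -> K) -> (nat -> K).
Hypothesis hA : is_op abs A.

Lemma op_QpN x : QpN abs x -> QpN abs (A x).
Proof. by case: hA => h _ _ _; apply: h. Qed.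

Lemma op_add x y : QpN abs x -> QpN abs y -> A (fun i => x i + y i) = (fun i => A x i + A y i).
Proof. by case: hA => _ h _ _; apply: h. Qed.

Lemma op_Zpscale a x : Defs.Zp abs a -> QpN abs x -> A (fun i => a * x i) = (fun i => a * A x i).
Proof. by case: hA => _ _ h _; apply: h. Qed.

Lemma op_cont U : tau_open abs U -> tau_open abs (fun x => QpN abs x /\ U (A x)).
Proof. by case: hA => _ _ _ h; apply: h. Qed.

Lemma op0 : A (fun _ => 0) = (fun _ => 0).
Proof.
have := op_Zpscale zp0 QpN0; rewrite (_ : (fun i => 0 * 0) = (fun _ => 0)).
  by move=> ->; apply: boolp.funext => i; rewrite mul0r.
by apply: boolp.funext => i; rewrite mulr0.
Qed.

Lemma op_scale c x : QpN abs x -> QpN abs (fun i => c * x i) ->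
  A (fun i => c * x i) = (fun i => c * A x i).
Proof.
move=> Qx Qcx.
have [hc|hc] := lerP (abs c) 1; first exact: op_Zpscale.
have c0 : c != 0 by apply/eqP => c0; move: hc; rewrite c0 abs0 ltr10.
have hci : Defs.Zp abs c^-1.
  by rewrite /Defs.Zp abs_inv invf_le1 ?ltW // (lt_trans ltr01 hc).
have := op_Zpscale hci Qcx.
rewrite (_ : (fun i => c^-1 * (c * x i)) = x); last first.
  by apply: boolp.funext => i; rewrite mulrA mulVf // mul1r.
move=> e; apply: boolp.funext => i.
by rewrite e mulrA mulfV // mul1r.
Qed.

Lemma op_opp x : QpN abs x -> A (fun i => - x i) = (fun i => - A x i).
Proof.
move=> Qx.
have h := op_Zpscale (zp_opp zp1) Qx.
rewrite (_ : (fun i => -1 * x i) = (fun i => - x i)) in h; last first.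
  by apply: boolp.funext => i; rewrite mulN1r.
by rewrite h; apply: boolp.funext => i; rewrite mulN1r.
Qed.

Lemma op_sub x y : QpN abs x -> QpN abs y -> A (fun i => x i - y i) = (fun i => A x i - A y i).
Proof.
move=> Qx Qy; rewrite op_add //; last exact: QpN_opp.
by rewrite op_opp.
Qed.

Lemma op_delta c j : A (fun i => c * delta K j i) = (fun i => c * entry A i j).
Proof.
have Qd : QpN abs (delta K j).
  by apply: (@QpN_fin _ j.+1) => i hi; rewrite /delta (gtn_eqF hi).
by rewrite op_scale //; apply: QpN_delta.
Qed.

Lemma QpN_trunc n x : QpN abs (trunc n x).
Proof. by apply: (@QpN_fin _ n) => i hi; rewrite /trunc ltnNge hi. Qed.

Lemma op_trunc n x i : A (trunc n x) i = \sum_(j < n) x j * entry A i j.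
Proof.
elim: n => [|n IH].
  have t0 : trunc 0 x = (fun _ => 0) by apply: boolp.funext => j; rewrite /trunc.
  by rewrite big_ord0 t0 op0.
rewrite big_ord_recr /= -IH.
have -> : trunc n.+1 x = fun j => trunc n x j + x n * delta K n j.
  apply: boolp.funext => j; rewrite /trunc /delta ltnS leq_eqVlt.
  have [->|jn] := eqVneq j n; first by rewrite ltnn mulr1 add0r.
  by rewrite /= mulr0 addr0.
by rewrite op_add ?op_delta //; [apply: QpN_trunc | apply: QpN_delta].
Qed.

Lemma QpN_tail n x : QpN abs x -> QpN abs (tail n x).
Proof.
move=> [N hN]; exists N => i hi; rewrite /tail; case: ifP => _; [exact: zp0 | exact: hN].
Qed.

Lemma op_split n x i : QpN abs x -> A x i = A (trunc n x) i + A (tail n x) i.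
Proof.
move=> Qx; have e := op_add (QpN_trunc n x) (QpN_tail n Qx).
have ex : (fun j => trunc n x j + tail n x j) = x.
  by apply: boolp.funext => j; rewrite /trunc /tail; case: ifP; rewrite ?addr0 ?add0r.
by rewrite ex in e; rewrite e.
Qed.

Lemma cont0 i e P : 0 < e -> exists n e', 0 < e' /\
  forall y, XP abs P y -> close n e' (fun _ => 0) y -> abs (A y i) < e.
Proof.
move=> e0.
have hW := tau_open_close i.+1 e (fun _ => 0).
have [_ hV] := op_cont hW.
have V0 : QpN abs (fun _ => 0 : K) /\
   (QpN abs (A (fun _ => 0)) /\ close i.+1 e (fun _ => 0) (A (fun _ => 0))).
  rewrite op0; split; first exact: QpN0.
  by split; [exact: QpN0 | move=> j _; rewrite subrr abs0].
have [n [e' [e'0 h]]] := hV P (fun _ => 0) (fun j _ => zp0) V0.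
exists n, e'; split => // y hy cy.
have [_ [_ hc]] := h y hy cy.
by have := hc i (ltnSn i); rewrite subr0.
Qed.

Lemma op_repr x i e : QpN abs x -> 0 < e -> exists n0, forall n, (n0 <= n)%N ->
  abs (A x i - \sum_(j < n) x j * entry A i j) < e.
Proof.
move=> Qx e0; have [N hN] := Qx.
have [n1 [e1 [e10 h]]] := cont0 i (iota 0 N) e0.
exists (maxn n1 N) => n hn.
rewrite (op_split n i Qx) op_trunc addrC addKr.
apply: h.
  apply/XP_iota => j hj; rewrite /tail; case: ifP => _; [exact: zp0 | exact: hN].
move=> j hj; rewrite /tail (leq_trans hj (leq_trans (leq_maxl _ _) hn)) subrr abs0 //.
Qed.

Lemma op_bound x i b : QpN abs x -> 0 <= b -> (forall j, abs (x j * entry A i j) <= b) ->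
  abs (A x i) <= b.
Proof.
move=> Qx b0 hb; apply: le_of_max_eps => // e e0.
have [n0 hn0] := op_repr i Qx e0.
have := hn0 n0 (leqnn _) => h1.
have h2 : abs (\sum_(j < n0) x j * entry A i j) <= b by apply: (abs_sum_le (f := fun j => x j * entry A i j)) => // j _.
have -> : A x i = (A x i - \sum_(j < n0) x j * entry A i j) + \sum_(j < n0) x j * entry A i j.
  by rewrite subrK.
apply: le_trans (abs_ultra _ _) _.
by rewrite ge_max !le_max (ltW h1) h2 orbT.
Qed.

Lemma row_decay i e : 0 < e -> exists J, forall j, (J <= j)%N -> abs (entry A i j) < e.
Proof.
move=> e0; have [n [e' [e'0 h]]] := cont0 i nil e0.
exists n => j hj; apply: h.
  move=> k _; rewrite /delta; case: eqP => _; [exact: zp1 | exact: zp0].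
move=> k hk; rewrite /delta (ltn_eqF (leq_trans hk hj)) subrr abs0 //.
Qed.

Lemma col_decay j e : 0 < e -> exists N, forall i, (N <= i)%N -> abs (entry A i j) < e.
Proof.
move=> e0; have [k hk] := small_pow e0.
set c : K := ((p%:R)^-1)^+k.
have [N hN] := op_QpN (QpN_delta c j).
exists N => i /hN; rewrite op_delta /Defs.Zp abs_mul /c abs_exp abs_pinv => h.
apply: le_lt_trans hk.
have pk : (0 : R) < (p%:R)^+k by apply: exprn_gt0; apply: pR_gt0.
by rewrite exprVn -[X in _ <= X]mul1r ler_pdivlMr // mulrC.
Qed.

End Op.

Lemma ge_min_l (a b : R) : Num.min a b <= a. Proof. by rewrite ge_min lexx. Qed.
Lemma ge_min_r (a b : R) : Num.min a b <= b. Proof. by rewrite ge_min lexx orbT. Qed.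


Lemma list_nat_bound (s : list nat) : exists N, forall i, List.In i s -> (i <= N)%N.
Proof.
elim: s => [|a s [N hN]]; first by exists 0%N.
exists (maxn a N) => i [<-|/hN h]; first exact: leq_maxl.
by apply: leq_trans h (leq_maxr _ _).
Qed.

Lemma bound_fin_nat (f : nat -> nat) N : exists M, forall i, (i < N)%N -> (f i <= M)%N.
Proof.
elim: N => [|N [M hM]]; first by exists 0%N.
exists (maxn M (f N)) => i; rewrite ltnS leq_eqVlt => /orP [/eqP ->|hi].
  exact: leq_maxr.
by apply: leq_trans (hM _ hi) (leq_maxl _ _).
Qed.

Lemma pow_big (x : R) : exists m, x <= (p%:R)^+m.
Proof.
exists (Num.Def.archi_bound x).
have h1 : x < 2 ^+ (Num.Def.archi_bound x) by apply: upper_nthrootP.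
have h2 : (2 : R) ^+ (Num.Def.archi_bound x) <= (p%:R) ^+ (Num.Def.archi_bound x).
  by apply: lerXn2r; rewrite ?nnegrE ?ler0n // ler_nat prime_gt1.
exact: ltW (lt_le_trans h1 h2).
Qed.

Lemma nat_big (x : R) : exists k : nat, x < k%:R.
Proof.
have [x0|x0] := lerP 0 x; last by exists 0%N.
by exists (Num.Def.archi_bound x); apply: archi_boundP.
Qed.

Lemma op_bounded A : is_op abs A -> exists Cst, 0 < Cst /\
  forall x, QpN abs x -> normle abs x 1 -> normle abs (A x) Cst.
Proof.
move=> hA.
pose W k := fun z => Xn k z /\ (QpN abs z /\ close k k%:R (fun _ => 0) z).
pose U k := fun x => QpN abs x /\ W k (A x).
have Uo : forall k, tau_open abs (U k).
  by move=> k; apply: (op_cont hA); apply: tau_open_and; [apply: tau_open_Xn | apply: tau_open_close].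
have XPnil : forall y, box (fun _ => 1) y -> XP abs nil y by move=> y hy j _; apply: hy.
have [s hs] : FC U (box (fun _ => 1)).
  apply: (@box_compact nat U (fun _ => 1) 0%N _ (box (fun _ => 1))).
  - by move=> i; rewrite expr0.
  - by [].
  - by move=> z hz _.
  - move=> i x Cx Ux; have [_ h] := Uo i.
    have [n [e [e0 hn]]] := h nil x (XPnil x Cx) Ux.
    by exists n, e; split => // y Cy cy; apply: hn => //; apply: XPnil.
  - move=> x Cx.
    have Qx : QpN abs x by exists 0%N => j _; apply: Cx.
    have Qax := op_QpN hA Qx.
    have [N hN] := Qax.
    have [M [M1 hM]] := QpN_bounded Qax.
    have [k0 hk0] := nat_big M.
    exists (maxn N k0); split => //; split; first by apply: Xn_mono hN; apply: leq_maxl.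
    split => // i _; rewrite subr0; apply: le_lt_trans (hM i) _.
    by apply: lt_le_trans hk0 _; rewrite ler_nat leq_maxr.
have [K0 hK0] := list_nat_bound s.
exists (K0%:R + 1); split; first by apply: ltr_wpDl; rewrite ?ler0n ?ltr01.
move=> x Qx hx i.
have [k [ks [_ [hk1 [_ hk2]]]]] := hs x hx.
have kK := hK0 k ks.
have [ik|ik] := ltnP i k.
  have := hk2 i ik; rewrite subr0 => h; apply: ltW; apply: lt_le_trans h _.
  by apply: le_trans (_ : K0%:R <= _); [rewrite ler_nat | rewrite lerDl ler01].
apply: le_trans (hk1 i ik) _; rewrite lerDr; exact: ler0n.
Qed.

Lemma op_bounded_c A Cst c x : is_op abs A ->
  (forall x, QpN abs x -> normle abs x 1 -> normle abs (A x) Cst) ->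
  c != 0 -> QpN abs x -> normle abs (fun i => c * x i) 1 ->
  normle abs (A x) (Cst / abs c).
Proof.
move=> hA hC c0 Qx hx.
have Qcx : QpN abs (fun i => c * x i) by exists 0%N => i _; apply: hx.
have := hC _ Qcx hx; rewrite (op_scale hA Qx Qcx) => h i.
have ac : 0 < abs c by rewrite lt_def abs_ge0 andbT; apply/eqP => /abs_eq0; apply/eqP.
by rewrite ler_pdivlMr // mulrC -abs_mul.
Qed.

Lemma op_cont_nbhd A P x N n e : is_op abs A -> XP abs P x -> Xn N (A x) -> 0 < e ->
  exists n' e', 0 < e' /\ forall y, XP abs P y -> close n' e' x y ->
    Xn N (A y) /\ close n e (A x) (A y).
Proof.
move=> hA hx hN e0.
have Wo : tau_open abs (fun z => Xn N z /\ (QpN abs z /\ close n e (A x) z)).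
  by apply: tau_open_and; [apply: tau_open_Xn | apply: tau_open_close].
have [_ hV] := op_cont hA Wo.
have Qx : QpN abs x by have [N' [h _]] := XP_Xn hx; exists N'.
have Vx : QpN abs x /\ (Xn N (A x) /\ (QpN abs (A x) /\ close n e (A x) (A x))).
  by do 3 (split => //); [exact: op_QpN | move=> i _; rewrite subrr abs0].
have [n' [e' [e'0 h]]] := hV P x hx Vx.
by exists n', e'; split => // y hy cy; have [_ [h1 [_ h2]]] := h y hy cy.
Qed.

Lemma XP_QpN P y : XP abs P y -> QpN abs y.
Proof. by move=> hy; have [N [h _]] := XP_Xn hy; exists N. Qed.

Lemma is_op_add A B : is_op abs A -> is_op abs B -> is_op abs (fun x i => A x i + B x i).
Proof.
move=> hA hB; split.
- by move=> x Qx; apply: QpN_add; apply: op_QpN.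
- move=> x y Qx Qy; rewrite (op_add hA Qx Qy) (op_add hB Qx Qy).
  by apply: boolp.funext => i; rewrite addrACA.
- move=> a x ha Qx; rewrite (op_Zpscale hA ha Qx) (op_Zpscale hB ha Qx).
  by apply: boolp.funext => i; rewrite mulrDr.
move=> U [hU1 hU2]; split; first by move=> x [].
move=> P x hx [Qx Ux].
have [N1 h1] := op_QpN hA Qx; have [N2 h2] := op_QpN hB Qx.
set N := maxn N1 N2.
have hAx : Xn N (A x) by apply: Xn_mono h1; apply: leq_maxl.
have hBx : Xn N (B x) by apply: Xn_mono h2; apply: leq_maxr.
have hABx : XP abs (iota 0 N) (fun i => A x i + B x i).
  by apply/XP_iota => j hj; apply: zp_add; [apply: hAx | apply: hBx].
have [n [e [e0 he]]] := hU2 _ _ hABx Ux.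
have [n1 [e1 [e10 k1]]] := @op_cont_nbhd _ _ _ _ n _ hA hx hAx e0.
have [n2 [e2 [e20 k2]]] := @op_cont_nbhd _ _ _ _ n _ hB hx hBx e0.
exists (maxn n1 n2), (Num.min e1 e2); split; first by rewrite lt_min e10 e20.
move=> y hy cy; split; first exact: XP_QpN hy.
have [a1 a2] := k1 y hy (fun i hi => lt_le_trans (cy i (leq_trans hi (leq_maxl _ _))) (ge_min_l _ _)).
have [b1 b2] := k2 y hy (fun i hi => lt_le_trans (cy i (leq_trans hi (leq_maxr _ _))) (ge_min_r _ _)).
apply: he.
  by apply/XP_iota => j hj; apply: zp_add; [apply: a1 | apply: b1].
move=> i hi; have -> : A y i + B y i - (A x i + B x i) = (A y i - A x i) + (B y i - B x i) by ring.
by apply: abs_lt_add; [apply: a2 | apply: b2].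
Qed.

Lemma is_op_opp A : is_op abs A -> is_op abs (fun x i => - A x i).
Proof.
move=> hA; split.
- by move=> x Qx; apply: QpN_opp; apply: op_QpN.
- move=> x y Qx Qy; rewrite (op_add hA Qx Qy).
  by apply: boolp.funext => i; rewrite opprD.
- move=> a x ha Qx; rewrite (op_Zpscale hA ha Qx).
  by apply: boolp.funext => i; rewrite mulrN.
move=> U [hU1 hU2]; split; first by move=> x [].
move=> P x hx [Qx Ux].
have [N h1] := op_QpN hA Qx.
have hAx : XP abs (iota 0 N) (fun i => - A x i).
  by apply/XP_iota => j hj; apply: zp_opp; apply: h1.
have [n [e [e0 he]]] := hU2 _ _ hAx Ux.
have [n1 [e1 [e10 k1]]] := @op_cont_nbhd _ _ _ _ n _ hA hx h1 e0.
exists n1, e1; split => // y hy cy; split; first exact: XP_QpN hy.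
have [a1 a2] := k1 y hy cy.
apply: he; first by apply/XP_iota => j hj; apply: zp_opp; apply: a1.
by move=> i hi; rewrite -opprD absN; apply: a2.
Qed.

Lemma is_op_comp A B : is_op abs A -> is_op abs B -> is_op abs (fun x => A (B x)).
Proof.
move=> hA hB; split.
- by move=> x Qx; apply: (op_QpN hA); apply: (op_QpN hB).
- move=> x y Qx Qy; rewrite (op_add hB Qx Qy).
  by rewrite (op_add hA (op_QpN hB Qx) (op_QpN hB Qy)).
- move=> a x ha Qx; rewrite (op_Zpscale hB ha Qx).
  by rewrite (op_Zpscale hA ha (op_QpN hB Qx)).
move=> U hU.
have := op_cont hB (op_cont hA hU).
apply: tau_open_ext; last by move=> x [].
move=> x Qx; split; first by move=> [_ [_ h]].
by move=> [_ h]; split => //; split => //; apply: (op_QpN hB).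
Qed.

Lemma pairs_bound (s : seq (nat * nat)) :
  exists N, forall ij, ij \in s -> (ij.1 < N)%N /\ (ij.2 < N)%N.
Proof.
elim: s => [|a s [N hN]]; first by exists 0%N.
exists (maxn (maxn a.1 a.2).+1 N) => ij; rewrite inE => /orP [/eqP ->|/hN [h1 h2]].
  by rewrite !leq_max !ltnS !leq_max !leqnn /= orbT.
by rewrite !leq_max h1 h2 !orbT.
Qed.

Lemma ent_rowcol A e : entries_to_zero abs A -> 0 < e ->
  exists N, forall i j, ((N <= i) || (N <= j))%N -> abs (entry A i j) <= e.
Proof.
move=> ent e0; have [s hs] := ent e e0; have [N hN] := pairs_bound s.
exists N => i j hij; rewrite leNgt; apply/negP => /hs /hN /= [h1 h2].
by move: hij; rewrite (leqNgt N i) (leqNgt N j) h1 h2.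
Qed.

Lemma ent_bound A : entries_to_zero abs A ->
  exists Bd, 1 <= Bd /\ forall i j, abs (entry A i j) <= Bd.
Proof.
move=> ent; have [s hs] := ent 1 ltr01.
have : exists Bd, 1 <= Bd /\ forall ij, ij \in s -> abs (entry A ij.1 ij.2) <= Bd.
  elim: s {hs} => [|a s [Bd [B1 hB]]]; first by exists 1.
  exists (Num.max Bd (abs (entry A a.1 a.2))); split; first by rewrite le_max B1.
  move=> ij; rewrite inE => /orP [/eqP ->|/hB h]; first by rewrite le_max lexx orbT.
  by rewrite le_max h.
move=> [Bd [B1 hB]]; exists Bd; split => // i j.
have [h|h] := lerP (abs (entry A i j)) 1; first exact: le_trans h B1.
exact: (hB (i, j) (hs i j h)).
Qed.

Definition csup A i : R := sup (fun t => exists j, t = abs (entry A i j)).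

Lemma csup_ub A i j : entries_to_zero abs A -> abs (entry A i j) <= csup A i.
Proof.
move=> ent; have [Bd [_ hB]] := ent_bound ent.
have hub : classical_sets.has_ubound (fun t : R => exists j, t = abs (entry A i j)).
  by exists Bd => t [k ->].
exact: (ub_le_sup hub) _ (ex_intro _ j erefl).
Qed.

Lemma csup_le A i b : (forall j, abs (entry A i j) <= b) -> csup A i <= b.
Proof.
move=> hb; apply: ge_sup; first by exists (abs (entry A i 0%N)), 0%N.
by move=> t [k ->].
Qed.

Lemma csup_ge0 A i : entries_to_zero abs A -> 0 <= csup A i.
Proof. by move=> ent; apply: le_trans (abs_ge0 _) (csup_ub i 0%N ent). Qed.

Lemma csup_small A e : entries_to_zero abs A -> 0 < e ->
  exists N, forall i, (N <= i)%N -> csup A i <= e.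
Proof.
move=> ent e0; have [N hN] := ent_rowcol ent e0.
by exists N => i hi; apply: csup_le => j; apply: hN; rewrite hi.
Qed.

Lemma csup_bd A : entries_to_zero abs A -> exists Bd, forall i, csup A i <= Bd.
Proof.
move=> ent; have [Bd [_ hB]] := ent_bound ent.
by exists Bd => i; apply: csup_le.
Qed.

Lemma image_closure A S x : is_op abs A -> (forall x, S x -> QpN abs x) -> S x ->
  tau_closure abs (Defs.image A S) (A x).
Proof.
move=> hA hS Sx; split; first by apply: (op_QpN hA); apply: hS.
by move=> U _ UAx; exists (A x); split => //; exists x.
Qed.

Lemma image_nclosure A S x : is_op abs A -> (forall x, S x -> QpN abs x) -> S x ->
  norm_closure abs (Defs.image A S) (A x).
Proof.
move=> hA hS Sx; split; first by apply: (op_QpN hA); apply: hS.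
by move=> U _ UAx; exists (A x); split => //; exists x.
Qed.

Lemma ent_of_Xn A : is_op abs A ->
  (forall S, norm_bounded abs S -> exists N, forall x, S x -> Xn N (A x)) ->
  entries_to_zero abs A.
Proof.
move=> hA hS e e0.
have [k hk] := small_pow e0.
set c : K := ((p%:R)^-1)^+k.
pose S := fun x => exists j, x = (fun i => c * delta K j i).
have Sb : norm_bounded abs S.
  split; first by move=> x [j ->]; apply: QpN_delta.
  exists (abs c) => x [j ->] i; rewrite abs_mul.
  apply: ler_piMr; first exact: abs_ge0.
  by rewrite /delta; case: eqP => _; rewrite ?abs1 ?abs0 ?ler01.
have [N hN] := hS S Sb.
have small : forall i j, (N <= i)%N -> abs (entry A i j) <= rho k.
  move=> i j hi.
  have := hN _ (ex_intro _ j erefl) i hi; rewrite op_delta // /Defs.Zp abs_mul /c abs_exp abs_pinv => h.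
  have pk : (0 : R) < (p%:R)^+k by apply: exprn_gt0; apply: pR_gt0.
  by rewrite /rho exprVn -[X in _ <= X]mul1r ler_pdivlMr // mulrC.
have [Jf hJf] := boolp.choice (fun i => row_decay hA i e0).
have [J hJ] := bound_fin_nat Jf N.
exists [seq (i, j) | i <- iota 0 N, j <- iota 0 J] => i j hij.
have iN : (i < N)%N.
  rewrite ltnNge; apply/negP => /(small _ j) h.
  by move: (lt_le_trans hij (ltW (le_lt_trans h hk))); rewrite ltxx.
have jJ : (j < J)%N.
  rewrite ltnNge; apply/negP => hj.
  have := hJf i j (leq_trans (hJ i iN) hj).
  by move/(lt_trans hij); rewrite ltxx.
by apply: allpairs_f; rewrite mem_iota add0n.
Qed.

Lemma ent_of_compact A : is_op abs A -> compact_op abs A -> entries_to_zero abs A.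
Proof.
move=> hA hc; apply: ent_of_Xn => // S hS.
have [hC1 hC2] := hc S hS.
have [N hN] := compact_in_Xn (C := tau_closure abs (Defs.image A S)) (Opn := tau_open abs) hC1
  (fun U hU cov => hC2 nat U hU cov) tau_open_Xn.
exists N => x Sx; apply: hN; apply: image_closure => //; exact: hS.1.
Qed.

Lemma ent_of_ncompact A : is_op abs A -> norm_compact_op abs A -> entries_to_zero abs A.
Proof.
move=> hA hc; apply: ent_of_Xn => // S hS.
have [hC1 hC2] := hc S hS.
have [N hN] := compact_in_Xn (C := norm_closure abs (Defs.image A S)) (Opn := norm_open abs) hC1
  (fun U hU cov => hC2 nat U hU cov) norm_open_Xn.
exists N => x Sx; apply: hN; apply: image_nclosure => //; exact: hS.1.
Qed.

Lemma tau_rel_compact_box (S' : (nat -> K) -> Prop) r m :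
  (forall i, 0 <= r i) -> (forall i, r i <= (p%:R)^+m) ->
  (exists N, forall i, (N <= i)%N -> r i <= 1) -> (forall y, S' y -> box r y) ->
  rel_tau_compact abs S'.
Proof.
move=> r0 hr [N hN] hS.
have boxXn : forall y, box r y -> Xn N y.
  by move=> y hy j hj; apply: le_trans (hy j) (hN j hj).
have boxXP : forall y, box r y -> XP abs (iota 0 N) y.
  by move=> y hy; apply/XP_iota; apply: boxXn.
have clbox : forall y, tau_closure abs S' y -> box r y.
  move=> y [Qy hy] i; rewrite leNgt; apply/negP => hlt.
  have [y' [[_ h1] h2]] := hy _ (tau_open_gt i (r0 i)) (conj Qy hlt).
  by move: (hS _ h2 i); rewrite leNgt h1.
split; first by move=> x [].
move=> I U hU cov.
apply: (@box_compact I U r m hr (tau_closure abs S')).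
- exact: clbox.
- move=> z hz hadh; split; first exact: Xn_QpN (boxXn _ hz).
  move=> U0 hU0 U0z; have [_ hU02] := hU0.
  have [n [e [e0 he]]] := hU02 (iota 0 N) z (boxXP _ hz) U0z.
  have [y [Cy cy]] := hadh n e e0.
  have U0y : U0 y by apply: he => //; apply: boxXP; apply: clbox.
  exact: Cy.2 U0 hU0 U0y.
- move=> i x Cx Ux; have [_ h] := hU i.
  have [n [e [e0 he]]] := h _ x (boxXP _ (clbox _ Cx)) Ux.
  exists n, e; split => // y Cy cy; apply: he => //; apply: boxXP; exact: clbox.
- exact: cov.
Qed.

Lemma nball_of_close r N x y e : box r x -> box r y -> QpN abs y -> 0 < e ->
  (forall i, (N <= i)%N -> r i <= e / 4) -> close N (e / 2) x y -> nball abs x e y.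
Proof.
move=> bx by_ Qy e0 hr cy; split => //; exists (e / 2); split; first lra.
move=> i; have [iN|iN] := ltnP i N; first exact: ltW (cy i iN).
apply: abs_le_sub; [apply: le_trans (by_ i) _ | apply: le_trans (bx i) _]; apply: le_trans (hr i iN) _; lra.
Qed.

Lemma norm_rel_compact_box (S' : (nat -> K) -> Prop) r m :
  (forall i, 0 <= r i) -> (forall i, r i <= (p%:R)^+m) ->
  (forall e, 0 < e -> exists N, forall i, (N <= i)%N -> r i <= e) ->
  (forall y, S' y -> box r y) ->
  rel_norm_compact abs S'.
Proof.
move=> r0 hr hsm hS.
have [N hN] := hsm 1 ltr01.
have boxXn : forall y, box r y -> Xn N y.
  by move=> y hy j hj; apply: le_trans (hy j) (hN j hj).
have clbox : forall y, norm_closure abs S' y -> box r y.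
  move=> y [Qy hy] i; rewrite leNgt; apply/negP => hlt.
  have [y' [[_ h1] h2]] := hy _ (norm_open_gt i (r0 i)) (conj Qy hlt).
  by move: (hS _ h2 i); rewrite leNgt h1.
split; first by move=> x [].
move=> I U hU cov.
apply: (@box_compact I U r m hr (norm_closure abs S')).
- exact: clbox.
- move=> z hz hadh; split; first exact: Xn_QpN (boxXn _ hz).
  move=> U0 hU0 U0z; have [_ hU02] := hU0.
  have [e [e0 he]] := hU02 z U0z.
  have [N' hN'] := hsm (e / 4) (ltac:(lra)).
  have [y [Cy cy]] := hadh N' (e / 2) (ltac:(lra)).
  have U0y : U0 y by apply: he; apply: (nball_of_close hz (clbox _ Cy) Cy.1 e0 hN' cy).
  exact: Cy.2 U0 hU0 U0y.
- move=> i x Cx Ux; have [_ h] := hU i.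
  have [e [e0 he]] := h x Ux.
  have [N' hN'] := hsm (e / 4) (ltac:(lra)).
  exists N', (e / 2); split; first lra.
  move=> y Cy cy; apply: he.
  exact: (nball_of_close (clbox _ Cx) (clbox _ Cy) Cy.1 e0 hN' cy).
- exact: cov.
Qed.

Lemma compact_of_ent A : is_op abs A -> entries_to_zero abs A ->
  compact_op abs A /\ norm_compact_op abs A.
Proof.
move=> hA ent.
have key : forall S, norm_bounded abs S -> exists r m,
  [/\ forall i, 0 <= r i, forall i, r i <= (p%:R)^+m,
      (forall e, 0 < e -> exists N, forall i, (N <= i)%N -> r i <= e)
    & forall y, Defs.image A S y -> box r y].
  move=> S [hS1 [M hM]].
  set M1 := Num.max M 1.
  have M10 : 0 < M1 by rewrite lt_max ltr01 orbT.
  have hM1 : forall x, S x -> normle abs x M1.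
    by move=> x Sx i; rewrite le_max (hM x Sx i).
  have [Bd hBd] := csup_bd ent.
  have [m hm] := pow_big (M1 * Bd).
  exists (fun i => M1 * csup A i), m; split.
  - by move=> i; apply: mulr_ge0; [exact: ltW | exact: csup_ge0].
  - by move=> i; apply: le_trans hm; apply: ler_wpM2l; [exact: ltW | exact: hBd].
  - move=> e e0; have [N hN] := csup_small ent (divr_gt0 e0 M10).
    exists N => i hi; apply: le_trans (ler_wpM2l (ltW M10) (hN i hi)) _; by rewrite mulrC divfK ?gt_eqF.
  - move=> y [x [Sx ->]] i; apply: (op_bound hA (hS1 _ Sx)).
      by apply: mulr_ge0; [exact: ltW | exact: csup_ge0].
    move=> j; rewrite abs_mul; apply: ler_pM; rewrite ?abs_ge0 //.
      exact: hM1.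
    exact: csup_ub.
split => S hS; have [r [m [r0 hr hsm hb]]] := key S hS.
  apply: tau_rel_compact_box r0 hr _ hb.
  exact: hsm 1 ltr01.
exact: norm_rel_compact_box r0 hr hsm hb.
Qed.

Lemma QpN_delta1 j : QpN abs (delta K j).
Proof. by apply: (@QpN_fin _ j.+1) => i hi; rewrite /delta (gtn_eqF hi). Qed.

Lemma pK_exp_neq0 k : ((p%:R : K)^+k) != 0.
Proof. by apply: expf_neq0; apply: pK_neq0. Qed.

Lemma ent_comp T A : is_op abs T -> is_op abs A -> entries_to_zero abs A ->
  entries_to_zero abs (fun x => T (A x)).
Proof.
move=> hT hA ent e e0.
have [Cst [C0 hC]] := op_bounded hT.
have [k hk] := small_pow (divr_gt0 e0 C0).
have [J hJ] := ent_rowcol ent (rho_gt0 k).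
have big : forall i j, (J <= j)%N -> abs (T (A (delta K j)) i) <= Cst * rho k.
  move=> i j hj.
  have Qa : QpN abs (A (delta K j)) by apply: (op_QpN hA); apply: QpN_delta1.
  set c : K := ((p%:R)^-1)^+k.
  have c0 : c != 0 by apply: expf_neq0; rewrite invr_eq0 pK_neq0.
  have ac : abs c = (p%:R)^+k by rewrite /c abs_exp abs_pinv.
  have h := @op_bounded_c T Cst c (A (delta K j)) hT hC c0 Qa.
  have pk : (0:R) < (p%:R)^+k by apply: exprn_gt0; apply: pR_gt0.
  have hn : normle abs (fun l => c * A (delta K j) l) 1.
    move=> l; rewrite abs_mul ac.
    have hl : abs (A (delta K j) l) <= rho k by apply: hJ; rewrite hj orbT.
    apply: le_trans (ler_wpM2l (ltW pk) hl) _.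
    by rewrite /rho exprVn mulfV ?gt_eqF.
  by have := h hn i; rewrite ac /rho exprVn.
have hTA := is_op_comp hT hA.
have [Nf hNf] := boolp.choice (fun j => col_decay hTA j e0).
have [N hN] := bound_fin_nat Nf J.
exists [seq (i, j) | i <- iota 0 N, j <- iota 0 J] => i j hij.
have jJ : (j < J)%N.
  rewrite ltnNge; apply/negP => hj.
  have hk' : Cst * rho k < e by move: hk; rewrite ltr_pdivlMr // mulrC.
  have h := big i j hj.
  have : abs (entry (fun x => T (A x)) i j) < e by apply: le_lt_trans h hk'.
  by move/(lt_trans hij); rewrite ltxx.
have iN : (i < N)%N.
  rewrite ltnNge; apply/negP => hi.
  have := hNf j i (leq_trans (hN j jJ) hi).
  by move/(lt_trans hij); rewrite ltxx.
by apply: allpairs_f; rewrite mem_iota add0n.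
Qed.

Lemma ent_add A B : entries_to_zero abs A -> entries_to_zero abs B ->
  entries_to_zero abs (fun x i => A x i + B x i).
Proof.
move=> eA eB e e0; have [s1 h1] := eA e e0; have [s2 h2] := eB e e0.
exists (s1 ++ s2) => i j; rewrite /entry => h; rewrite mem_cat.
have := lt_le_trans h (abs_ultra _ _).
rewrite lt_max => /orP [hh|hh]; first by rewrite (h1 i j hh).
by rewrite (h2 i j hh) orbT.
Qed.

Lemma ent_opp A : entries_to_zero abs A -> entries_to_zero abs (fun x i => - A x i).
Proof.
move=> eA e e0; have [s1 h1] := eA e e0; exists s1 => i j; rewrite /entry absN; exact: h1.
Qed.

Lemma ent0 : entries_to_zero abs (fun _ _ => 0).
Proof. by move=> e e0; exists nil => i j; rewrite /entry abs0 => /(lt_trans e0); rewrite ltxx. Qed.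

Lemma is_op0 : is_op abs (fun _ _ => 0).
Proof.
split.
- by move=> x _; apply: QpN0.
- by move=> x y _ _; apply: boolp.funext => i; rewrite addr0.
- by move=> a x _ _; apply: boolp.funext => i; rewrite mulr0.
move=> U hU.
have [h|h] := boolp.pselect (U (fun _ => 0)).
  apply: (@tau_open_ext (QpN abs)); [| by move=> x [] | exact: tau_open_QpN].
  by move=> x Qx; split => // _; split.
apply: (@tau_open_ext (fun _ => False)); [| by move=> x [] | exact: tau_open_empty].
by move=> x Qx; split => // [[_ /h]].
Qed.

Definition slim (u : nat -> K) (l : K) := forall e, 0 < e -> exists N, forall n, (N <= n)%N ->
  abs (\sum_(j < n) u j - l) < e.

Lemma abs_le0 x : abs x <= 0 -> x = 0.
Proof. by move=> h; apply/abs_eq0; apply/eqP; rewrite eq_le h abs_ge0. Qed.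

Lemma slim_unique u l l' : slim u l -> slim u l' -> l = l'.
Proof.
move=> h1 h2; apply/eqP; rewrite -subr_eq0; apply/eqP; apply: abs_le0.
apply: le_of_max_eps => // e e0.
have [N1 k1] := h1 e e0; have [N2 k2] := h2 e e0.
have a1 := k1 (maxn N1 N2) (leq_maxl _ _); have a2 := k2 (maxn N1 N2) (leq_maxr _ _).
have -> : l - l' = (\sum_(j < maxn N1 N2) u j - l') - (\sum_(j < maxn N1 N2) u j - l) by ring.
by rewrite le_max ltW // abs_lt_sub.
Qed.

Lemma slim_ext u v l : (forall j, u j = v j) -> slim u l -> slim v l.
Proof.
move=> e h e' e0; have [N hN] := h e' e0; exists N => n hn.
by rewrite (eq_bigr (fun j : 'I_n => u j)); [apply: hN | move=> j _; rewrite e].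
Qed.

Lemma slim_add u v l l' : slim u l -> slim v l' -> slim (fun j => u j + v j) (l + l').
Proof.
move=> h1 h2 e e0; have [N1 k1] := h1 e e0; have [N2 k2] := h2 e e0.
exists (maxn N1 N2) => n hn; rewrite big_split /=.
have -> : \sum_(j < n) u j + \sum_(j < n) v j - (l + l') =
  (\sum_(j < n) u j - l) + (\sum_(j < n) v j - l') by ring.
apply: abs_lt_add; [apply: k1 | apply: k2]; apply: leq_trans hn; [exact: leq_maxl | exact: leq_maxr].
Qed.

Lemma slim_scale c u l : slim u l -> slim (fun j => c * u j) (c * l).
Proof.
move=> h e e0.
have c1 : 0 < abs c + 1 by apply: ltr_wpDl; rewrite ?abs_ge0 ?ltr01.
have [N hN] := h (e / (abs c + 1)) (divr_gt0 e0 c1).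
exists N => n hn; rewrite -mulr_sumr -mulrBr abs_mul.
have := hN n hn; rewrite ltr_pdivlMr // => h2.
apply: le_lt_trans h2; rewrite mulrC; apply: ler_wpM2l; first exact: abs_ge0.
by rewrite lerDl ler01.
Qed.

Lemma slim_scale_r c u l : slim u l -> slim (fun j => u j * c) (l * c).
Proof.
move=> h; rewrite mulrC; apply: slim_ext (slim_scale c h) => j; exact: mulrC.
Qed.

Lemma slim_sub u v l l' : slim u l -> slim v l' -> slim (fun j => u j - v j) (l - l').
Proof.
move=> h1 h2; have := slim_add h1 (slim_scale (-1) h2).
rewrite mulN1r; apply: slim_ext => j; by rewrite mulN1r.
Qed.

Lemma sum_extend (u : nat -> K) N d : (forall j, (N <= j)%N -> u j = 0) ->
  \sum_(j < N + d) u j = \sum_(j < N) u j.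
Proof.
move=> h; elim: d => [|d IH]; first by rewrite addn0.
by rewrite addnS big_ord_recr /= IH h ?addr0 // leq_addr.
Qed.

Lemma slim_fin u N : (forall j, (N <= j)%N -> u j = 0) -> slim u (\sum_(j < N) u j).
Proof.
move=> h e e0; exists N => n hn; rewrite -(subnKC hn) sum_extend // subrr abs0 //.
Qed.

Lemma slim_bound u l b : slim u l -> 0 <= b -> (forall j, abs (u j) <= b) -> abs l <= b.
Proof.
move=> h b0 hb; apply: le_of_max_eps => // e e0.
have [N hN] := h e e0; have h1 := hN N (leqnn N).
have h2 : abs (\sum_(j < N) u j) <= b by apply: abs_sum_le.
have -> : l = - (\sum_(j < N) u j - l) + \sum_(j < N) u j by ring.
apply: le_trans (abs_ultra _ _) _; rewrite absN.
by rewrite ge_max !le_max (ltW h1) h2 orbT.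
Qed.

Lemma abs_sum_lt n (f : nat -> K) b : 0 < b -> (forall j, (j < n)%N -> abs (f j) < b) ->
  abs (\sum_(j < n) f j) < b.
Proof.
move=> b0; elim: n => [|n IH] h; first by rewrite big_ord0 abs0.
rewrite big_ord_recr /=; apply: abs_lt_add; last exact: h.
by apply: IH => j hj; apply: h; apply: ltnW.
Qed.

Lemma psum_diff (u : nat -> K) n d :
  \sum_(j < n + d) u j - \sum_(j < n) u j = \sum_(j < d) u (n + j)%N.
Proof.
elim: d => [|d IH]; first by rewrite addn0 subrr big_ord0.
by rewrite addnS !big_ord_recr /= -IH addrAC.
Qed.

Lemma slim_exists u : (forall e, 0 < e -> exists N, forall j, (N <= j)%N -> abs (u j) < e) ->
  exists l, slim u l.
Proof.
move=> h.
have cauchy : forall e, 0 < e -> exists N, forall m n, (N <= m)%N -> (N <= n)%N ->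
    abs (\sum_(j < m) u j - \sum_(j < n) u j) < e.
  move=> e e0; have [N hN] := h e e0; exists N.
  have key : forall m n, (N <= n)%N -> (n <= m)%N -> abs (\sum_(j < m) u j - \sum_(j < n) u j) < e.
    move=> m n hn hnm; rewrite -(subnKC hnm) psum_diff.
    by apply: (abs_sum_lt (f := fun j => u (n + j)%N)) => // j _; apply: hN; apply: leq_trans hn (leq_addr _ _).
  move=> m n hm hn; have [nm|mn] := leqP n m; first exact: key.
  by rewrite absB; apply: key => //; apply: ltnW.
have [l hl] := Qp_complete hQ cauchy.
by exists l.
Qed.

Lemma slim_sum (f : nat -> nat -> K) (ls : nat -> K) N :
  (forall i, (i < N)%N -> slim (f i) (ls i)) ->
  slim (fun j => \sum_(i < N) f i j) (\sum_(i < N) ls i).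
Proof.
elim: N => [|N IH] h.
  have h0 : slim (fun _ => 0) 0.
    by move=> e e0; exists 0%N => n _; rewrite big1 // subrr abs0.
  by rewrite big_ord0; apply: slim_ext h0 => j; rewrite big_ord0.
have := slim_add (IH (fun i hi => h i (ltnW hi))) (h N (ltnSn N)).
rewrite big_ord_recr /=; apply: slim_ext => j; by rewrite big_ord_recr.
Qed.

Lemma slim_tail_bound (t : nat -> K) L N : slim t L ->
  (forall j, (N <= j)%N -> abs (t j) <= 1) -> abs (L - \sum_(j < N) t j) <= 1.
Proof.
move=> h ht.
have hf := slim_fin (u := fun j => if (j < N)%N then t j else 0) (N := N).
have e : \sum_(j < N) (if (j < N)%N then t j else 0) = \sum_(j < N) t j.
  by apply: eq_bigr => j _; rewrite ltn_ord.
rewrite e in hf.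
have hz : forall j, (N <= j)%N -> (if (j < N)%N then t j else 0) = 0.
  by move=> j hj; rewrite ltnNge hj.
have hs := slim_sub h (hf hz); apply: slim_bound hs ler01 _ => j.
by case: ifP => hj; rewrite ?subrr ?abs0 ?ler01 // subr0; apply: ht; rewrite leqNgt hj.
Qed.

Definition slimit (u : nat -> K) : K :=
  match boolp.pselect (exists l, slim u l) with
  | left h => proj1_sig (boolp.cid h)
  | right _ => 0 end.

Lemma slimitP u : (exists l, slim u l) -> slim u (slimit u).
Proof.
move=> h; rewrite /slimit; case: boolp.pselect => // h'.
exact: proj2_sig (boolp.cid h').
Qed.

Lemma slim_of_op A x i : is_op abs A -> QpN abs x ->
  slim (fun j => x j * entry A i j) (A x i).
Proof.
move=> hA Qx e e0; have [n0 hn0] := op_repr hA i Qx e0.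
by exists n0 => n hn; rewrite absB; apply: hn0.
Qed.

Lemma sum_single (g : nat -> K) i N : (forall l, l != i -> g l = 0) ->
  \sum_(l < N) g l = if (i < N)%N then g i else 0.
Proof.
move=> h; elim: N => [|N IH]; first by rewrite big_ord0.
rewrite big_ord_recr /= IH.
have [->|iN] := eqVneq i N; first by rewrite ltnn ltnSn add0r.
by rewrite (h N) 1?eq_sym // addr0 ltnS (leq_eqVlt i N) (negbTE iN).
Qed.

Lemma adj_entry A B : is_op abs A -> is_op abs B -> is_adjoint abs A B ->
  forall i j, entry B i j = entry A j i.
Proof.
move=> hA hB hadj i j.
set a := entry A j i; set b := entry B i j.
have hk : forall k, abs (b - a) <= rho k.
  move=> k; set c : K := ((p%:R)^-1)^+k.
  have ac : abs c = (p%:R)^+k by rewrite /c abs_exp abs_pinv.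
  have [N [h1 h2]] := hadj _ _ (QpN_delta c i) (QpN_delta1 j).
  rewrite (op_delta hA) in h1 h2.
  have e1 : \sum_(l < N) (c * entry A l i) * delta K j l = if (j < N)%N then c * a else 0.
    rewrite (@sum_single (fun l => c * entry A l i * delta K j l) j N) /=.
      by rewrite /delta eqxx mulr1.
    by move=> l hl; rewrite /delta (negbTE hl) mulr0.
  have e2 : \sum_(l < N) (c * delta K i l) * B (delta K j) l = if (i < N)%N then c * b else 0.
    rewrite (@sum_single (fun l => c * delta K i l * B (delta K j) l) i N) /=.
      by rewrite /delta eqxx mulr1.
    by move=> l hl; rewrite /delta (negbTE hl) mulr0 mul0r.
  rewrite e1 e2 in h2.
  have hX : Defs.Zp abs (c * a) \/ (j < N)%N.
    have [jN|jN] := ltnP j N; first by right.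
    by left; have [h _] := h1 j jN; move: h; rewrite /delta eqxx mulr1.
  have hY : Defs.Zp abs (c * b) \/ (i < N)%N.
    have [iN|iN] := ltnP i N; first by right.
    by left; have [_ h] := h1 i iN; move: h; rewrite /delta eqxx mulr1.
  have hZ : Defs.Zp abs (c * b - c * a).
    rewrite -[_ - _]opprB; apply: zp_opp.
    case: hX => [hX|jN]; case: hY => [hY|iN].
    - exact: zp_sub.
    - move: h2; rewrite iN; case: ifP => _ h //.
      have -> : c * a - c * b = c * a + (0 - c * b) by rewrite add0r.
      exact: zp_add.
    - move: h2; rewrite jN; case: ifP => _ h //.
      have -> : c * a - c * b = (c * a - 0) - c * b by rewrite subr0.
      exact: zp_sub.
    - by move: h2; rewrite iN jN.
  move: hZ; rewrite /Defs.Zp -mulrBr abs_mul ac.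
  have pk : (0:R) < (p%:R)^+k by apply: exprn_gt0; apply: pR_gt0.
  by rewrite /rho exprVn -ler_pdivlMl // mulr1.
apply/eqP; rewrite -subr_eq0; apply/eqP; apply: abs_le0; apply: le_of_max_eps => // e e0.
have [k hk'] := small_pow e0.
by rewrite le_max (le_trans (hk k) (ltW hk')).
Qed.

Lemma ent_transpose A B : (forall i j, entry B i j = entry A j i) ->
  entries_to_zero abs A -> entries_to_zero abs B.
Proof.
move=> e ent e' e0; have [s hs] := ent e' e0.
exists [seq (ij.2, ij.1) | ij <- s] => i j; rewrite e => /hs h.
by apply/mapP; exists (j, i).
Qed.

Lemma cont_of_local B : (forall x, QpN abs x -> QpN abs (B x)) ->
  (forall x y, QpN abs x -> QpN abs y -> B (fun i => x i + y i) = (fun i => B x i + B y i)) ->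
  (forall P e, 0 < e -> e <= 1 -> exists n e', 0 < e' /\
     forall y, XP abs P y -> close n e' (fun _ => 0) y -> forall j, abs (B y j) < e) ->
  forall U, tau_open abs U -> tau_open abs (fun x => QpN abs x /\ U (B x)).
Proof.
move=> hQ' hadd hloc U [hU1 hU2]; split; first by move=> x [].
move=> P x hx [Qx Ux].
have [N0 hN0] := hQ' x Qx.
have [n [e [e0 he]]] := hU2 (iota 0 N0) (B x) (proj2 (XP_iota _ _) hN0) Ux.
have e10 : 0 < Num.min e 1 by rewrite lt_min e0 ltr01.
have [n' [e' [e'0 hl]]] := hloc P _ e10 (ge_min_r _ _).
exists n', e'; split => // y hy cy.
have Qy := XP_QpN hy.
have Qd : QpN abs (fun i => y i - x i) by apply: QpN_sub.
have hd : XP abs P (fun i => y i - x i).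
  by move=> j hj; apply: zp_sub; [apply: hy | apply: hx].
have cd : close n' e' (fun _ => 0) (fun i => y i - x i).
  by move=> i hi; rewrite subr0; apply: cy.
have hb := hl _ hd cd.
have eB : B y = (fun i => B x i + B (fun i => y i - x i) i).
  rewrite -hadd //; congr B; apply: boolp.funext => i; by rewrite addrC subrK.
split => //; rewrite eB; apply: he.
  apply/XP_iota => j hj; apply: zp_add; first exact: hN0.
  by apply: ltW; apply: lt_le_trans (hb j) (ge_min_r _ _).
move=> i hi; rewrite [X in abs X](_ : _ = B (fun i => y i - x i) i); last by ring.
by apply: lt_le_trans (hb i) (ge_min_l _ _).
Qed.

Section Adj.
Variable A : (nat -> K) -> (nat -> K).
Hypothesis hA : is_op abs A.
Hypothesis ent : entries_to_zero abs A.

Definition Bop (eta : nat -> K) : nat -> K := fun j => slimit (fun i => eta i * entry A i j).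

Lemma Bconv eta j : QpN abs eta -> exists l, slim (fun i => eta i * entry A i j) l.
Proof.
move=> Qe; have [M [M1 hM]] := QpN_bounded Qe.
have M0 : 0 < M by apply: lt_le_trans ltr01 M1.
apply: slim_exists => e e0.
have e20 : 0 < e / (M * 2) by apply: divr_gt0 => //; apply: mulr_gt0.
have [N hN] := ent_rowcol ent e20.
exists N => i hi; rewrite abs_mul.
apply: le_lt_trans (_ : M * (e / (M * 2)) < e).
  by apply: ler_pM; rewrite ?abs_ge0 //; apply: hN; rewrite hi.
rewrite (_ : M * (e / (M * 2)) = e / 2); first lra.
by field; rewrite ?gt_eqF.
Qed.

Lemma Bslim eta j : QpN abs eta -> slim (fun i => eta i * entry A i j) (Bop eta j).
Proof. by move=> Qe; apply: slimitP; apply: Bconv. Qed.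

Lemma Bop_bound eta j b : QpN abs eta -> 0 <= b ->
  (forall i, abs (eta i * entry A i j) <= b) -> abs (Bop eta j) <= b.
Proof. by move=> Qe b0 h; apply: slim_bound (Bslim j Qe) b0 h. Qed.

Lemma Bop_QpN eta : QpN abs eta -> QpN abs (Bop eta).
Proof.
move=> Qe; have [M [M1 hM]] := QpN_bounded Qe.
have M0 : 0 < M by apply: lt_le_trans ltr01 M1.
have hMi : 0 < M^-1 by rewrite invr_gt0.
have [N hN] := ent_rowcol ent hMi.
exists N => j hj; apply: Bop_bound => // i; rewrite abs_mul.
apply: le_trans (_ : M * M^-1 <= 1); last by rewrite mulfV ?gt_eqF.
by apply: ler_pM; rewrite ?abs_ge0 //; apply: hN; rewrite hj orbT.
Qed.

Lemma Bop_add x y : QpN abs x -> QpN abs y ->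
  Bop (fun i => x i + y i) = (fun i => Bop x i + Bop y i).
Proof.
move=> Qx Qy; apply: boolp.funext => j.
apply: (slim_unique (Bslim j (QpN_add Qx Qy))).
apply: slim_ext (slim_add (Bslim j Qx) (Bslim j Qy)) => i; by rewrite mulrDl.
Qed.

Lemma Bop_scale a x : Defs.Zp abs a -> QpN abs x ->
  Bop (fun i => a * x i) = (fun i => a * Bop x i).
Proof.
move=> ha Qx; apply: boolp.funext => j.
apply: (slim_unique (Bslim j (QpN_Zpmul ha Qx))).
apply: slim_ext (slim_scale a (Bslim j Qx)) => i; by rewrite mulrA.
Qed.

Lemma Bop_loc P e : 0 < e -> e <= 1 -> exists n e', 0 < e' /\
  forall y, XP abs P y -> close n e' (fun _ => 0) y -> forall j, abs (Bop y j) < e.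
Proof.
move=> e0 e1.
have eps0 : 0 < e / 2 by lra.
have [Bd [B1 hBd]] := ent_bound ent.
have Bd0 : 0 < Bd by apply: lt_le_trans ltr01 B1.
have [Ns hNs] := ent_rowcol ent eps0.
have [nP hnP] := seq_bound P.
exists (maxn Ns nP), (e / 2 / Bd); split; first exact: divr_gt0.
move=> y hy cy j; have Qy := XP_QpN hy.
apply: le_lt_trans (_ : e / 2 < e); last lra.
apply: Bop_bound => //; first exact: ltW.
move=> i; rewrite abs_mul.
have [iN|iN] := ltnP i (maxn Ns nP).
  have := cy i iN; rewrite subr0 => hyi.
  apply: le_trans (_ : e / 2 / Bd * Bd <= _); last by rewrite divfK ?gt_eqF.
  by apply: ler_pM; rewrite ?abs_ge0 // ltW.
apply: le_trans (_ : 1 * (e / 2) <= _); last by rewrite mul1r.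
apply: ler_pM; rewrite ?abs_ge0 //.
  apply: hy; apply/negP => /hnP; rewrite ltnNge.
  by rewrite (leq_trans (leq_maxr _ _) iN).
by apply: hNs; rewrite (leq_trans (leq_maxl _ _) iN).
Qed.

Lemma Bop_is_op : is_op abs Bop.
Proof.
split.
- exact: Bop_QpN.
- exact: Bop_add.
- move=> a x ha Qx; exact: Bop_scale.
apply: cont_of_local; [exact: Bop_QpN | exact: Bop_add | exact: Bop_loc].
Qed.

Lemma Bop_adj : is_adjoint abs A Bop.
Proof.
move=> xi eta Qxi Qeta.
have [Mx [Mx1 hMx]] := QpN_bounded Qxi; have [My [My1 hMy]] := QpN_bounded Qeta.
have Mx0 : 0 < Mx by apply: lt_le_trans ltr01 Mx1.
have My0 : 0 < My by apply: lt_le_trans ltr01 My1.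
set eps := (Mx * My)^-1.
have eps0 : 0 < eps by rewrite invr_gt0 mulr_gt0.
have one : Mx * eps * My = 1 by rewrite /eps; field; rewrite ?gt_eqF.
have [N hN] := ent_rowcol ent eps0.
pose a i j := xi j * entry A i j * eta i.
have ha : forall i j, ((N <= i) || (N <= j))%N -> abs (a i j) <= 1.
  move=> i j hij; rewrite /a !abs_mul -one.
  apply: ler_pM; rewrite ?mulr_ge0 ?abs_ge0 //.
  by apply: ler_pM; rewrite ?abs_ge0 //; apply: hN.
exists N; split.
  move=> l hl; split.
    rewrite /Defs.Zp abs_mul -one; apply: ler_pM; rewrite ?abs_ge0 //.
    apply: (op_bound hA) => //; first by rewrite mulr_ge0 ?ltW.
    move=> j; rewrite abs_mul; apply: ler_pM; rewrite ?abs_ge0 //.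
    by apply: hN; rewrite hl.
  rewrite /Defs.Zp abs_mul -one -mulrA; apply: ler_pM; rewrite ?abs_ge0 //.
  apply: Bop_bound => //; first by rewrite mulr_ge0 ?ltW.
  move=> i; rewrite abs_mul mulrC; apply: ler_pM; rewrite ?abs_ge0 //.
  by apply: hN; rewrite hl orbT.
have s1 : slim (fun j => \sum_(i < N) a i j) (\sum_(i < N) A xi i * eta i).
  apply: (slim_sum (f := fun i j => a i j) (ls := fun i => A xi i * eta i)) => i _.
  exact: slim_scale_r (slim_of_op i hA Qxi).
have s2 : slim (fun i => \sum_(j < N) a i j) (\sum_(j < N) xi j * Bop eta j).
  apply: (slim_sum (f := fun j i => a i j) (ls := fun j => xi j * Bop eta j)) => j _.
  apply: slim_ext (slim_scale (xi j) (Bslim j Qeta)) => i.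
  by rewrite /a [eta i * _]mulrC mulrA.
have t1 := slim_tail_bound (N := N) s1.
have t2 := slim_tail_bound (N := N) s2.
have t1' : abs ((\sum_(i < N) A xi i * eta i) - \sum_(j < N) \sum_(i < N) a i j) <= 1.
  apply: t1 => j hj; apply: (abs_sum_le (f := fun i => a i j)) => // i _.
  by apply: ha; rewrite hj orbT.
have t2' : abs ((\sum_(j < N) xi j * Bop eta j) - \sum_(i < N) \sum_(j < N) a i j) <= 1.
  apply: t2 => i hi; apply: (abs_sum_le (f := fun j => a i j)) => // j _.
  by apply: ha; rewrite hi.
rewrite exchange_big /= in t2'.
have -> : \sum_(i < N) A xi i * eta i - \sum_(i < N) xi i * Bop eta i =
  ((\sum_(i < N) A xi i * eta i) - \sum_(j < N) \sum_(i < N) a i j) -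
  ((\sum_(j < N) xi j * Bop eta j) - \sum_(j < N) \sum_(i < N) a i j) by ring.
exact: zp_sub.
Qed.

End Adj.

Lemma main_inner :
  (forall A : (nat -> K) -> (nat -> K), is_op abs A ->
     (compact_op abs A <-> entries_to_zero abs A) /\
     (compact_op abs A <-> norm_compact_op abs A)) /\
  Kop abs (fun _ _ => 0) /\
  (forall A B, Kop abs A -> Kop abs B -> Kop abs (fun x i => A x i + B x i)) /\
  (forall A, Kop abs A -> Kop abs (fun x i => - A x i)) /\
  (forall A T, Kop abs A -> is_op abs T ->
     Kop abs (fun x => T (A x)) /\ Kop abs (fun x => A (T x))) /\
  (forall A, Kop abs A ->
     (exists B, is_op abs B /\ is_adjoint abs A B) /\
     (forall B, is_op abs B -> is_adjoint abs A B -> Kop abs B)).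
Proof.
have equiv : forall A, is_op abs A ->
    (compact_op abs A <-> entries_to_zero abs A) /\
    (compact_op abs A <-> norm_compact_op abs A).
  move=> A hA; split; split.
  - exact: ent_of_compact hA.
  - by move=> e; have [] := compact_of_ent hA e.
  - by move=> c; have [] := compact_of_ent hA (ent_of_compact hA c).
  - by move=> c; have [] := compact_of_ent hA (ent_of_ncompact hA c).
have cpt : forall A, is_op abs A -> entries_to_zero abs A -> Kop abs A.
  by move=> A hA e; split => //; have [] := compact_of_ent hA e.
split => //; split; first exact: cpt is_op0 ent0.
split.
  move=> A B [hA cA] [hB cB]; apply: cpt; first exact: is_op_add.
  by apply: ent_add; apply: ent_of_compact.
split.
  move=> A [hA cA]; apply: cpt; first exact: is_op_opp.
  by apply: ent_opp; apply: ent_of_compact.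
split.
  move=> A T [hA cA] hT; split.
    apply: cpt; first exact: is_op_comp.
    by apply: ent_comp => //; apply: ent_of_compact.
  split; first exact: is_op_comp.
  move=> S [hS1 [M hM]].
  have [Cst [C0 hC]] := op_bounded hT.
  have [m hm] := pow_big M.
  set c : K := (p%:R)^+m.
  have c0 : c != 0 by apply: pK_exp_neq0.
  have ac : abs c = ((p%:R)^-1)^+m by rewrite /c abs_exp abs_p.
  have hS' : norm_bounded abs (Defs.image T S).
    split; first by move=> y [x [Sx ->]]; apply: (op_QpN hT); apply: hS1.
    exists (Cst / abs c) => y [x [Sx ->]].
    apply: (op_bounded_c hT hC c0 (hS1 _ Sx)) => i; rewrite abs_mul ac.
    have pm : (0 : R) < (p%:R)^+m by apply: exprn_gt0; apply: pR_gt0.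
    apply: le_trans (_ : ((p%:R)^-1)^+m * (p%:R)^+m <= 1).
      by apply: ler_wpM2l; [apply: exprn_ge0; rewrite invr_ge0 ler0n | apply: le_trans (hM x Sx i) hm].
    by rewrite exprVn mulVf ?gt_eqF.
  have := cA _ hS'.
  have -> : Defs.image A (Defs.image T S) = Defs.image (fun x => A (T x)) S; last by [].
  apply: boolp.funext => y; apply: boolp.propext; split.
    by move=> [x' [[x [Sx ->]] ->]]; exists x.
  by move=> [x [Sx ->]]; exists (T x); split => //; exists x.
move=> A [hA cA]; have e := ent_of_compact hA cA; split.
  exists (Bop A); split; first exact: Bop_is_op.
  exact: Bop_adj.
move=> B hB hadj; apply: cpt => //.
exact: ent_transpose (adj_entry hA hB hadj) e.
Qed.

End Main.


Theorem lemma3p2 (p : nat) (R : realType) (K : fieldType) (abs : K -> R) :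
  prime p -> is_Qp p abs ->
  (forall A : (nat -> K) -> (nat -> K), is_op abs A ->
     (compact_op abs A <-> entries_to_zero abs A) /\
     (compact_op abs A <-> norm_compact_op abs A)) /\
  Kop abs (fun _ _ => 0) /\
  (forall A B, Kop abs A -> Kop abs B -> Kop abs (fun x i => A x i + B x i)) /\
  (forall A, Kop abs A -> Kop abs (fun x i => - A x i)) /\
  (forall A T, Kop abs A -> is_op abs T ->
     Kop abs (fun x => T (A x)) /\ Kop abs (fun x => A (T x))) /\
  (forall A, Kop abs A ->
     (exists B, is_op abs B /\ is_adjoint abs A B) /\
     (forall B, is_op abs B -> is_adjoint abs A B -> Kop abs B)).
move=> hp hQ; exact: (main_inner hp hQ).
Qed.
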